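(* Let $n\ge2$ and let $\psi:\mathbb D\to\widetilde\Gamma_n$ be an analytic map such that $\psi(\lambda_0)\in\widetilde{\mathbb G}_n$ for some $\lambda_0\in\mathbb D$. Then $\psi(\mathbb D)\subset\widetilde{\mathbb G}_n$.
   Context: $\mathbb D$ is the open unit disc. $\widetilde{\mathbb G}_n=\{(y_1,\dots,y_{n-1},q)\in\mathbb C^n: q\in\mathbb D,\ y_j=\beta_j+\bar\beta_{n-j}q$ for some $\beta_j\in\mathbb C$ with $|\beta_j|+|\beta_{n-j}|<\binom{n}{j}$, $j=1,\dots,n-1\}$; $\widetilde\Gamma_n$ is its closure. *)

(* Defs.v *)
From Stdlib Require Import Reals.
From Coquelicot Require Import Coquelicot.
Open Scope R_scope.

(* A point of C^n is represented as (y, q) with y : nat -> C; only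
   the coordinates y 1, ..., y (n-1) are relevant, q is the last one. *)

Definition in_disc (z : C) : Prop := Cmod z < 1.

Definition in_Gt (n : nat) (y : nat -> C) (q : C) : Prop :=
  in_disc q /\
  exists beta : nat -> C,
    forall j : nat, (1 <= j <= n - 1)%nat ->
      y j = (beta j + Cconj (beta (n - j)%nat) * q)%C /\
      Cmod (beta j) + Cmod (beta (n - j)%nat) < Binomial.C n j.

Definition in_Gammat (n : nat) (y : nat -> C) (q : C) : Prop :=
  forall eps : R, 0 < eps ->
    exists (y' : nat -> C) (q' : C),
      in_Gt n y' q' /\ Cmod (q - q') < eps /\
      forall j : nat, (1 <= j <= n - 1)%nat -> Cmod (y j - y' j) < eps.

Definition holo_on_disc (f : C -> C) : Prop :=
  forall z : C, in_disc z -> ex_derive (K := C_AbsRing) (V := C_NormedModule) f z.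

(* Main.v *)
Require Import Defs.
From Stdlib Require Import Reals Lra Psatz Lia.
From Coquelicot Require Import Coquelicot.
From Stdlib Require Import Classical.
Require Import Stdlib.Logic.FunctionalExtensionality.
Open Scope R_scope.


Lemma Cmod_le_abs (z : C) : Cmod z <= Rabs (fst z) + Rabs (snd z).
Proof.
  unfold Cmod. rewrite <- (Rabs_pos_eq (Rabs (fst z) + Rabs (snd z))) by
    (generalize (Rabs_pos (fst z)) (Rabs_pos (snd z)); lra).
  rewrite <- sqrt_Rsqr_abs. apply sqrt_le_1_alt.
  unfold Rsqr. rewrite <- (pow2_abs (fst z)), <- (pow2_abs (snd z)).
  generalize (Rabs_pos (fst z)) (Rabs_pos (snd z)); nra.
Qed.

Lemma abs_fst_le (z : C) : Rabs (fst z) <= Cmod z.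
Proof. apply re_le_Cmod. Qed.

Lemma abs_snd_le (z : C) : Rabs (snd z) <= Cmod z.
Proof.
  unfold Cmod. rewrite <- sqrt_Rsqr_abs. apply sqrt_le_1_alt.
  unfold Rsqr. nra.
Qed.

Lemma Cmod_sym (a b : C) : Cmod (a - b) = Cmod (b - a).
Proof. replace (a - b)%C with (- (b - a))%C by ring. apply Cmod_opp. Qed.

Lemma Cmod_Rmult (r : R) (z : C) : Cmod (RtoC r * z) = Rabs r * Cmod z.
Proof. rewrite Cmod_mult, Cmod_R. reflexivity. Qed.

Lemma Cmod_triangle3 (a b c : C) : Cmod (a + b + c) <= Cmod a + Cmod b + Cmod c.
Proof. eapply Rle_trans. apply Cmod_triangle. generalize (Cmod_triangle a b). lra. Qed.

Lemma Cmod_minus_le (a b : C) : Cmod (a - b) <= Cmod a + Cmod b.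
Proof. unfold Cminus. eapply Rle_trans. apply Cmod_triangle. rewrite Cmod_opp. lra. Qed.

Lemma Cmod_dist_tri (a b c : C) : Cmod (a - c) <= Cmod (a - b) + Cmod (b - c).
Proof. replace (a - c)%C with ((a - b) + (b - c))%C by ring. apply Cmod_triangle. Qed.

Lemma Cmod_rev_tri (a b : C) : Cmod a - Cmod b <= Cmod (a - b).
Proof. generalize (Cmod_dist_tri a b 0). replace (a - 0)%C with a by ring.
  replace (b - 0)%C with b by ring. lra. Qed.

Lemma C_eq (a b : C) : fst a = fst b -> snd a = snd b -> a = b.
Proof. destruct a, b; simpl; intros; subst; reflexivity. Qed.

Lemma Cmult_neq0 (a b : C) : a <> 0%C -> b <> 0%C -> (a * b)%C <> 0%C.
Proof.
  intros Ha Hb E. apply (f_equal Cmod) in E. rewrite Cmod_mult, Cmod_0 in E.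
  apply (proj1 (Cmod_gt_0 a)) in Ha. apply (proj1 (Cmod_gt_0 b)) in Hb. nra.
Qed.

Definition Ccont (f : C -> C) (z : C) : Prop :=
  forall eps, 0 < eps -> exists del, 0 < del /\
    forall w, Cmod (w - z) < del -> Cmod (f w - f z) < eps.

Definition Cdiff (f : C -> C) (z d : C) : Prop :=
  forall eps, 0 < eps -> exists del, 0 < del /\
    forall w, Cmod (w - z) < del -> Cmod (f w - f z - d * (w - z)) <= eps * Cmod (w - z).

Definition Rdiff (g : R -> C) (t : R) (v : C) : Prop :=
  forall eps, 0 < eps -> exists del, 0 < del /\
    forall h, Rabs h < del -> Cmod (g (t + h) - g t - RtoC h * v) <= eps * Rabs h.

Lemma Cdiff_cont f z d : Cdiff f z d -> Ccont f z.
Proof.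
  intros H eps Heps.
  destruct (H 1 Rlt_0_1) as [del [Hd Hw]].
  exists (Rmin del (eps / (Cmod d + 2))). split.
  { apply Rmin_pos; auto. apply Rdiv_lt_0_compat; auto. generalize (Cmod_ge_0 d); lra. }
  intros w Hw'.
  assert (H1 : Cmod (w - z) < del) by (eapply Rlt_le_trans; [apply Hw'|apply Rmin_l]).
  assert (H2 : Cmod (w - z) < eps / (Cmod d + 2)) by (eapply Rlt_le_trans; [apply Hw'|apply Rmin_r]).
  specialize (Hw w H1).
  replace (f w - f z)%C with ((f w - f z - d * (w - z)) + d * (w - z))%C by ring.
  eapply Rle_lt_trans. apply Cmod_triangle. rewrite Cmod_mult.
  assert (Hp : 0 < Cmod d + 2) by (generalize (Cmod_ge_0 d); lra).
  apply Rmult_lt_compat_r with (r := Cmod d + 2) in H2; auto.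
  unfold Rdiv in H2. rewrite Rmult_assoc, Rinv_l, Rmult_1_r in H2 by lra.
  generalize (Cmod_ge_0 (w - z)) (Cmod_ge_0 d). nra.
Qed.

Lemma Cdiff_ext f g z d del :
  0 < del -> (forall w, Cmod (w - z) < del -> f w = g w) -> Cdiff g z d -> Cdiff f z d.
Proof.
  intros Hdel Heq H eps Heps. destruct (H eps Heps) as [d1 [Hd1 Hw]].
  exists (Rmin del d1). split. apply Rmin_pos; auto.
  intros w Hw'. rewrite (Heq w), (Heq z).
  apply Hw. eapply Rlt_le_trans; [apply Hw'|apply Rmin_r].
  replace (z - z)%C with (RtoC 0) by ring. rewrite Cmod_0. auto.
  eapply Rlt_le_trans; [apply Hw'|apply Rmin_l].
Qed.

Lemma Cdiff_lip f z d : Cdiff f z d -> exists del, 0 < del /\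
  forall w, Cmod (w - z) < del -> Cmod (f w - f z) <= (Cmod d + 1) * Cmod (w - z).
Proof.
  intros H. destruct (H 1 Rlt_0_1) as [del [Hd Hw]]. exists del; split; auto.
  intros w Hw'. specialize (Hw w Hw').
  replace (f w - f z)%C with ((f w - f z - d * (w - z)) + d * (w - z))%C by ring.
  eapply Rle_trans. apply Cmod_triangle. rewrite Cmod_mult. lra.
Qed.

Lemma Cdiff_const c z : Cdiff (fun _ => c) z 0.
Proof.
  intros eps Heps. exists 1. split. lra. intros w _.
  replace (c - c - 0 * (w - z))%C with (RtoC 0) by ring. rewrite Cmod_0.
  generalize (Cmod_ge_0 (w - z)). nra.
Qed.

Lemma Cdiff_id z : Cdiff (fun w => w) z 1.
Proof.
  intros eps Heps. exists 1. split. lra. intros w _.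
  replace (w - z - 1 * (w - z))%C with (RtoC 0) by ring. rewrite Cmod_0.
  generalize (Cmod_ge_0 (w - z)). nra.
Qed.

Lemma Cdiff_plus f g z df dg : Cdiff f z df -> Cdiff g z dg ->
  Cdiff (fun w => f w + g w)%C z (df + dg).
Proof.
  intros Hf Hg eps Heps.
  destruct (Hf (eps/2)) as [d1 [Hd1 H1]]. lra.
  destruct (Hg (eps/2)) as [d2 [Hd2 H2]]. lra.
  exists (Rmin d1 d2). split. apply Rmin_pos; auto.
  intros w Hw.
  assert (Hw1 : Cmod (w - z) < d1) by (eapply Rlt_le_trans; [apply Hw|apply Rmin_l]).
  assert (Hw2 : Cmod (w - z) < d2) by (eapply Rlt_le_trans; [apply Hw|apply Rmin_r]).
  specialize (H1 w Hw1). specialize (H2 w Hw2).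
  replace (f w + g w - (f z + g z) - (df + dg) * (w - z))%C with
    ((f w - f z - df * (w - z)) + (g w - g z - dg * (w - z)))%C by ring.
  eapply Rle_trans. apply Cmod_triangle. lra.
Qed.

Lemma Cdiff_scal c f z df : Cdiff f z df -> Cdiff (fun w => c * f w)%C z (c * df).
Proof.
  intros Hf eps Heps.
  destruct (Hf (eps / (Cmod c + 1))) as [d1 [Hd1 H1]].
  { apply Rdiv_lt_0_compat; auto. generalize (Cmod_ge_0 c); lra. }
  exists d1. split; auto. intros w Hw. specialize (H1 w Hw).
  replace (c * f w - c * f z - c * df * (w - z))%C with (c * (f w - f z - df * (w - z)))%C by ring.
  rewrite Cmod_mult.
  assert (Hp : 0 < Cmod c + 1) by (generalize (Cmod_ge_0 c); lra).
  apply Rle_trans with (Cmod c * (eps / (Cmod c + 1) * Cmod (w - z))).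
  apply Rmult_le_compat_l; auto. apply Cmod_ge_0.
  assert (Cmod c * (eps / (Cmod c + 1)) <= eps).
  { unfold Rdiv. rewrite <- Rmult_assoc. apply Rle_trans with ((Cmod c + 1) * eps * / (Cmod c + 1)).
    apply Rmult_le_compat_r. left; apply Rinv_0_lt_compat; auto. nra.
    rewrite Rmult_comm, <- Rmult_assoc, Rinv_l; lra. }
  generalize (Cmod_ge_0 (w - z)). nra.
Qed.

Lemma Cdiff_mult f g z df dg : Cdiff f z df -> Cdiff g z dg ->
  Cdiff (fun w => f w * g w)%C z (df * g z + f z * dg).
Proof.
  intros Hf Hg eps Heps.
  set (M := Cmod (g z) + Cmod (f z) + Cmod df + 1).
  assert (HM : 0 < M) by (unfold M; generalize (Cmod_ge_0 (g z)) (Cmod_ge_0 (f z)) (Cmod_ge_0 df); lra).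
  set (e1 := Rmin 1 (eps / M)).
  assert (He1 : 0 < e1) by (apply Rmin_pos; [lra| apply Rdiv_lt_0_compat; auto]).
  assert (He1M : e1 * M <= eps).
  { apply Rle_trans with (eps / M * M). apply Rmult_le_compat_r; [lra| apply Rmin_r].
    unfold Rdiv. rewrite Rmult_assoc, Rinv_l; lra. }
  destruct (Hf e1 He1) as [d1 [Hd1 H1]].
  destruct (Hg e1 He1) as [d2 [Hd2 H2]].
  destruct (Cdiff_cont g z dg Hg e1 He1) as [d3 [Hd3 H3]].
  exists (Rmin d1 (Rmin d2 d3)). split. repeat apply Rmin_pos; auto.
  intros w Hw.
  assert (Hw1 : Cmod (w - z) < d1) by (eapply Rlt_le_trans; [apply Hw|apply Rmin_l]).
  assert (Hw2 : Cmod (w - z) < d2) by (eapply Rlt_le_trans; [apply Hw|eapply Rle_trans; [apply Rmin_r|apply Rmin_l]]).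
  assert (Hw3 : Cmod (w - z) < d3) by (eapply Rlt_le_trans; [apply Hw|eapply Rle_trans; [apply Rmin_r|apply Rmin_r]]).
  specialize (H1 w Hw1). specialize (H2 w Hw2). specialize (H3 w Hw3).
  replace (f w * g w - f z * g z - (df * g z + f z * dg) * (w - z))%C with
    ((f w - f z - df * (w - z)) * g z + f z * (g w - g z - dg * (w - z))
      + ((f w - f z - df * (w - z)) + df * (w - z)) * (g w - g z))%C by ring.
  eapply Rle_trans. apply Cmod_triangle3. rewrite !Cmod_mult.
  assert (Ha : Cmod (f w - f z - df * (w - z) + df * (w - z)) <= (e1 + Cmod df) * Cmod (w - z)).
  { eapply Rle_trans. apply Cmod_triangle. rewrite Cmod_mult. lra. }
  assert (He1' : e1 <= 1) by apply Rmin_l.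
  generalize (Cmod_ge_0 (w - z)) (Cmod_ge_0 (g w - g z)) (Cmod_ge_0 (f z)) (Cmod_ge_0 (g z))
    (Cmod_ge_0 (f w - f z - df * (w - z))) (Cmod_ge_0 (g w - g z - dg * (w - z)))
    (Cmod_ge_0 (f w - f z - df * (w - z) + df * (w - z))) (Cmod_ge_0 df).
  intros. unfold M in He1M.
  assert (Hb : Cmod (f w - f z - df * (w - z) + df * (w - z)) * Cmod (g w - g z) <= (1 + Cmod df) * Cmod (w - z) * e1).
  { apply Rle_trans with ((e1 + Cmod df) * Cmod (w - z) * Cmod (g w - g z)).
    apply Rmult_le_compat_r; auto.
    apply Rle_trans with ((1 + Cmod df) * Cmod (w - z) * Cmod (g w - g z)).
    apply Rmult_le_compat_r; auto. apply Rmult_le_compat_r; auto. lra.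
    apply Rmult_le_compat_l. nra. lra. }
  assert (Hc : Cmod (f w - f z - df * (w - z)) * Cmod (g z) <= e1 * Cmod (w - z) * Cmod (g z))
    by (apply Rmult_le_compat_r; auto).
  assert (Hd : Cmod (f z) * Cmod (g w - g z - dg * (w - z)) <= Cmod (f z) * (e1 * Cmod (w - z)))
    by (apply Rmult_le_compat_l; auto).
  nra.
Qed.

Lemma Cdiff_comp f G z d1 d2 : Cdiff f z d1 -> Cdiff G (f z) d2 ->
  Cdiff (fun w => G (f w)) z (d2 * d1).
Proof.
  intros Hf HG eps Heps.
  set (M := Cmod d1 + 1 + Cmod d2).
  assert (HM : 0 < M) by (unfold M; generalize (Cmod_ge_0 d1) (Cmod_ge_0 d2); lra).
  destruct (Cdiff_lip f z d1 Hf) as [d0 [Hd0 H0]].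
  destruct (HG (eps / M)) as [dG [HdG H2]]. apply Rdiv_lt_0_compat; auto.
  destruct (Hf (eps / M)) as [d3 [Hd3 H3]]. apply Rdiv_lt_0_compat; auto.
  assert (Hp : 0 < Cmod d1 + 1) by (generalize (Cmod_ge_0 d1); lra).
  exists (Rmin d0 (Rmin d3 (dG / (Cmod d1 + 1)))). split.
  repeat apply Rmin_pos; auto. apply Rdiv_lt_0_compat; auto.
  intros w Hw.
  assert (Hw0 : Cmod (w - z) < d0) by (eapply Rlt_le_trans; [apply Hw|apply Rmin_l]).
  assert (Hw3 : Cmod (w - z) < d3) by (eapply Rlt_le_trans; [apply Hw|eapply Rle_trans; [apply Rmin_r|apply Rmin_l]]).
  assert (HwG : Cmod (w - z) < dG / (Cmod d1 + 1)) by (eapply Rlt_le_trans; [apply Hw|eapply Rle_trans; [apply Rmin_r|apply Rmin_r]]).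
  specialize (H0 w Hw0). specialize (H3 w Hw3).
  assert (HfG : Cmod (f w - f z) < dG).
  { eapply Rle_lt_trans. apply H0.
    apply Rmult_lt_compat_l with (r := Cmod d1 + 1) in HwG; auto.
    unfold Rdiv in HwG. rewrite (Rmult_comm dG), <- Rmult_assoc, Rinv_r, Rmult_1_l in HwG; lra. }
  specialize (H2 (f w) HfG).
  replace (G (f w) - G (f z) - d2 * d1 * (w - z))%C with
    ((G (f w) - G (f z) - d2 * (f w - f z)) + d2 * (f w - f z - d1 * (w - z)))%C by ring.
  eapply Rle_trans. apply Cmod_triangle. rewrite Cmod_mult.
  assert (Hx : eps / M * Cmod (f w - f z) <= eps / M * ((Cmod d1 + 1) * Cmod (w - z))).
  { apply Rmult_le_compat_l; auto. left; apply Rdiv_lt_0_compat; auto. }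
  assert (Hy : Cmod d2 * Cmod (f w - f z - d1 * (w - z)) <= Cmod d2 * (eps / M * Cmod (w - z))).
  { apply Rmult_le_compat_l; auto. apply Cmod_ge_0. }
  assert (Hz : eps / M * M = eps) by (field; lra).
  assert (Hq : eps / M * ((Cmod d1 + 1) * Cmod (w - z)) + Cmod d2 * (eps / M * Cmod (w - z))
     = eps / M * M * Cmod (w - z)) by (unfold M; ring).
  rewrite Hz in Hq. lra.
Qed.

Lemma Cdiff_inv (w0 : C) : w0 <> 0%C -> Cdiff Cinv w0 (- / (w0 * w0))%C.
Proof.
  intros Hw0 eps Heps.
  assert (Hm : 0 < Cmod w0) by (apply (proj1 (Cmod_gt_0 w0)); exact Hw0).
  exists (Rmin (Cmod w0 / 2) (eps * Cmod w0 ^ 3 / 2)). split.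
  apply Rmin_pos. lra. apply Rdiv_lt_0_compat. apply Rmult_lt_0_compat; auto. apply pow_lt; auto. lra.
  intros w Hw.
  assert (Hw1 : Cmod (w - w0) < Cmod w0 / 2) by (eapply Rlt_le_trans; [apply Hw|apply Rmin_l]).
  assert (Hw2 : Cmod (w - w0) < eps * Cmod w0 ^ 3 / 2) by (eapply Rlt_le_trans; [apply Hw|apply Rmin_r]).
  assert (Hmw : Cmod w0 / 2 < Cmod w).
  { generalize (Cmod_rev_tri w0 w). rewrite Cmod_sym. lra. }
  assert (Hwn : w <> 0%C). { intro E; subst. rewrite Cmod_0 in Hmw. lra. }
  replace (/ w - / w0 - - / (w0 * w0) * (w - w0))%C with
    ((w - w0) * (w - w0) / (w * (w0 * w0)))%C by (field; split; auto).
  rewrite Cmod_div. rewrite !Cmod_mult.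
  2:{ repeat apply Cmult_neq0; auto. }
  set (h := Cmod (w - w0)) in *. set (m := Cmod w0) in *. set (mw := Cmod w) in *.
  assert (0 <= h) by apply Cmod_ge_0.
  apply Rle_trans with (h * h / (m / 2 * (m * m))).
  { unfold Rdiv. apply Rmult_le_compat_l. nra.
    apply Rinv_le_contravar. nra. apply Rmult_le_compat_r; nra. }
  apply Rle_trans with (h * (eps * m ^ 3 / 2) / (m / 2 * (m * m))).
  { unfold Rdiv. apply Rmult_le_compat_r. left; apply Rinv_0_lt_compat; nra.
    apply Rmult_le_compat_l; nra. }
  right. field. lra.
Qed.

Lemma is_derive_Cdiff (f : C -> C) z l :
  is_derive (K := C_AbsRing) (V := C_NormedModule) f z l -> Cdiff f z l.
Proof.
  intros [_ H] eps Heps.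
  assert (Hl : is_filter_lim (locally z) z) by (intros P HP; exact HP).
  specialize (H z Hl (mkposreal eps Heps)).
  destruct H as [[del Hdel] Hd]. simpl in Hd.
  exists (del / 2). split. lra.
  intros w Hw.
  assert (Hb : ball z del w).
  { change (Cmod (minus w z) < del). eapply Rlt_trans. apply Hw. lra. }
  specialize (Hd w Hb).
  replace (f w - f z - l * (w - z))%C with (f w - f z - (w - z) * l)%C by ring.
  exact Hd.
Qed.


Lemma Rdiff_lip g t v : Rdiff g t v -> exists del, 0 < del /\
  forall h, Rabs h < del -> Cmod (g (t + h)%R - g t) <= (Cmod v + 1) * Rabs h.
Proof.
  intros H. destruct (H 1 Rlt_0_1) as [del [Hd Hw]]. exists del; split; auto.
  intros h Hh. specialize (Hw h Hh).
  replace (g (t + h)%R - g t)%C with ((g (t + h)%R - g t - RtoC h * v) + RtoC h * v)%C by ring.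
  eapply Rle_trans. apply Cmod_triangle. rewrite Cmod_Rmult. lra.
Qed.

Lemma Rdiff_comp (G : C -> C) (g : R -> C) t d v :
  Cdiff G (g t) d -> Rdiff g t v -> Rdiff (fun s => G (g s)) t (d * v).
Proof.
  intros HG Hg eps Heps.
  set (M := Cmod v + 1 + Cmod d).
  assert (HM : 0 < M) by (unfold M; generalize (Cmod_ge_0 v) (Cmod_ge_0 d); lra).
  destruct (Rdiff_lip g t v Hg) as [d0 [Hd0 H0]].
  destruct (HG (eps / M)) as [dG [HdG H2]]. apply Rdiv_lt_0_compat; auto.
  destruct (Hg (eps / M)) as [d3 [Hd3 H3]]. apply Rdiv_lt_0_compat; auto.
  assert (Hp : 0 < Cmod v + 1) by (generalize (Cmod_ge_0 v); lra).
  exists (Rmin d0 (Rmin d3 (dG / (Cmod v + 1)))). split.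
  repeat apply Rmin_pos; auto. apply Rdiv_lt_0_compat; auto.
  intros h Hw.
  assert (Hw0 : Rabs h < d0) by (eapply Rlt_le_trans; [apply Hw|apply Rmin_l]).
  assert (Hw3 : Rabs h < d3) by (eapply Rlt_le_trans; [apply Hw|eapply Rle_trans; [apply Rmin_r|apply Rmin_l]]).
  assert (HwG : Rabs h < dG / (Cmod v + 1)) by (eapply Rlt_le_trans; [apply Hw|eapply Rle_trans; [apply Rmin_r|apply Rmin_r]]).
  specialize (H0 h Hw0). specialize (H3 h Hw3).
  assert (HfG : Cmod (g (t + h)%R - g t) < dG).
  { eapply Rle_lt_trans. apply H0.
    apply Rmult_lt_compat_l with (r := Cmod v + 1) in HwG; auto.
    unfold Rdiv in HwG. rewrite (Rmult_comm dG), <- Rmult_assoc, Rinv_r, Rmult_1_l in HwG; lra. }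
  specialize (H2 (g (t + h)%R) HfG).
  replace (G (g (t + h)%R) - G (g t) - RtoC h * (d * v))%C with
    ((G (g (t + h)%R) - G (g t) - d * (g (t + h)%R - g t)) + d * (g (t + h)%R - g t - RtoC h * v))%C by ring.
  eapply Rle_trans. apply Cmod_triangle. rewrite Cmod_mult.
  assert (Hx : eps / M * Cmod (g (t + h)%R - g t) <= eps / M * ((Cmod v + 1) * Rabs h)).
  { apply Rmult_le_compat_l; auto. left; apply Rdiv_lt_0_compat; auto. }
  assert (Hy : Cmod d * Cmod (g (t + h)%R - g t - RtoC h * v) <= Cmod d * (eps / M * Rabs h)).
  { apply Rmult_le_compat_l; auto. apply Cmod_ge_0. }
  assert (Hz : eps / M * M = eps) by (field; lra).
  assert (Hq : eps / M * ((Cmod v + 1) * Rabs h) + Cmod d * (eps / M * Rabs h)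
     = eps / M * M * Rabs h) by (unfold M; ring).
  rewrite Hz in Hq. lra.
Qed.

Lemma Rdiff_fst g t v : Rdiff g t v -> derivable_pt_lim (fun s => fst (g s)) t (fst v).
Proof.
  intros H eps Heps.
  destruct (H (eps / 2)) as [del [Hd Hw]]. lra.
  exists (mkposreal del Hd). intros h Hh0 Hh. simpl in Hh.
  specialize (Hw h Hh).
  assert (E : fst (g (t + h)%R - g t - RtoC h * v)%C = fst (g (t + h)%R) - fst (g t) - h * fst v)
    by (simpl; ring).
  generalize (abs_fst_le (g (t + h)%R - g t - RtoC h * v)%C). rewrite E. intro Hf.
  replace ((fst (g (t + h)%R) - fst (g t)) / h - fst v) with
    ((fst (g (t + h)%R) - fst (g t) - h * fst v) / h) by (field; auto).
  unfold Rdiv. rewrite Rabs_mult, Rabs_inv.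
  assert (0 < Rabs h) by (apply Rabs_pos_lt; auto).
  apply Rmult_lt_reg_r with (Rabs h); auto. rewrite Rmult_assoc, Rinv_l by lra. nra.
Qed.

Lemma Rdiff_snd g t v : Rdiff g t v -> derivable_pt_lim (fun s => snd (g s)) t (snd v).
Proof.
  intros H eps Heps.
  destruct (H (eps / 2)) as [del [Hd Hw]]. lra.
  exists (mkposreal del Hd). intros h Hh0 Hh. simpl in Hh.
  specialize (Hw h Hh).
  assert (E : snd (g (t + h)%R - g t - RtoC h * v)%C = snd (g (t + h)%R) - snd (g t) - h * snd v)
    by (simpl; ring).
  generalize (abs_snd_le (g (t + h)%R - g t - RtoC h * v)%C). rewrite E. intro Hf.
  replace ((snd (g (t + h)%R) - snd (g t)) / h - snd v) with
    ((snd (g (t + h)%R) - snd (g t) - h * snd v) / h) by (field; auto).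
  unfold Rdiv. rewrite Rabs_mult, Rabs_inv.
  assert (0 < Rabs h) by (apply Rabs_pos_lt; auto).
  apply Rmult_lt_reg_r with (Rabs h); auto. rewrite Rmult_assoc, Rinv_l by lra. nra.
Qed.

Lemma cont_eps (h : R -> R) t :
  (forall eps, 0 < eps -> exists del, 0 < del /\ forall s, Rabs (s - t) < del -> Rabs (h s - h t) < eps) ->
  continuous h t.
Proof.
  intros H. apply continuity_pt_filterlim.
  intros eps Heps. destruct (H eps Heps) as [del [Hd Hs]].
  exists del. split; auto. intros s [_ Hs']. apply Hs. exact Hs'.
Qed.

Definition Pcont (F : R -> C) (t : R) : Prop :=
  forall eps, 0 < eps -> exists del, 0 < del /\ forall s, Rabs (s - t) < del -> Cmod (F s - F t) < eps.

Lemma Pcont_comp (f : C -> C) g t v : Rdiff g t v -> Ccont f (g t) -> Pcont (fun s => f (g s)) t.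
Proof.
  intros Hg Hf eps Heps.
  destruct (Hf eps Heps) as [d1 [Hd1 H1]].
  destruct (Rdiff_lip g t v Hg) as [d0 [Hd0 H0]].
  assert (Hp : 0 < Cmod v + 1) by (generalize (Cmod_ge_0 v); lra).
  exists (Rmin d0 (d1 / (Cmod v + 1))). split. apply Rmin_pos; auto. apply Rdiv_lt_0_compat; auto.
  intros s Hs.
  replace s with (t + (s - t)) by ring. apply H1.
  eapply Rle_lt_trans. apply H0. eapply Rlt_le_trans. apply Hs. apply Rmin_l.
  assert (Hs2 : Rabs (s - t) < d1 / (Cmod v + 1)) by (eapply Rlt_le_trans; [apply Hs|apply Rmin_r]).
  apply Rmult_lt_compat_l with (r := Cmod v + 1) in Hs2; auto.
  unfold Rdiv in Hs2. rewrite (Rmult_comm d1), <- Rmult_assoc, Rinv_r, Rmult_1_l in Hs2; lra.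
Qed.

Lemma Pcont_fst F t : Pcont F t -> continuous (fun s => fst (F s)) t.
Proof.
  intros H. apply cont_eps. intros eps Heps. destruct (H eps Heps) as [d [Hd Hs]].
  exists d; split; auto. intros s Hs'. specialize (Hs s Hs').
  eapply Rle_lt_trans; [|apply Hs]. replace (fst (F s) - fst (F t)) with (fst (F s - F t)%C) by (simpl; ring).
  apply abs_fst_le.
Qed.

Lemma Pcont_snd F t : Pcont F t -> continuous (fun s => snd (F s)) t.
Proof.
  intros H. apply cont_eps. intros eps Heps. destruct (H eps Heps) as [d [Hd Hs]].
  exists d; split; auto. intros s Hs'. specialize (Hs s Hs').
  eapply Rle_lt_trans; [|apply Hs]. replace (snd (F s) - snd (F t)) with (snd (F s - F t)%C) by (simpl; ring).
  apply abs_snd_le.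
Qed.

Lemma Ccont_scal c f z : Ccont f z -> Ccont (fun w => c * f w)%C z.
Proof.
  intros H eps Heps. destruct (H (eps / (Cmod c + 1))) as [d [Hd Hw]].
  { apply Rdiv_lt_0_compat; auto. generalize (Cmod_ge_0 c); lra. }
  exists d; split; auto. intros w Hw'. specialize (Hw w Hw').
  replace (c * f w - c * f z)%C with (c * (f w - f z))%C by ring. rewrite Cmod_mult.
  assert (Hp : 0 < Cmod c + 1) by (generalize (Cmod_ge_0 c); lra).
  apply Rle_lt_trans with (Cmod c * (eps / (Cmod c + 1))).
  apply Rmult_le_compat_l. apply Cmod_ge_0. lra.
  apply Rlt_le_trans with ((Cmod c + 1) * (eps / (Cmod c + 1))).
  apply Rmult_lt_compat_r. apply Rdiv_lt_0_compat; auto. lra.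
  right; field; lra.
Qed.

Lemma Ccont_minus_const f z c : Ccont f z -> Ccont (fun w => f w - c)%C z.
Proof.
  intros H eps Heps. destruct (H eps Heps) as [d [Hd Hw]]. exists d; split; auto.
  intros w Hw'. replace (f w - c - (f z - c))%C with (f w - f z)%C by ring. auto.
Qed.


Definition CI (g : R -> C) (a b : R) : C :=
  (RInt (fun t => fst (g t)) a b, RInt (fun t => snd (g t)) a b).

Definition lin (a b : C) (t : R) : C := (a + RtoC t * (b - a))%C.

Definition seg (f : C -> C) (a b : C) : C := ((b - a) * CI (fun t => f (lin a b t)) 0 1)%C.

Definition SegCont (f : C -> C) (a b : C) : Prop :=
  forall t, 0 <= t <= 1 -> Ccont f (lin a b t).

Lemma Rdiff_lin a b t : Rdiff (lin a b) t (b - a).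
Proof.
  intros eps Heps. exists 1. split. lra. intros h _. unfold lin.
  replace (a + RtoC (t + h)%R * (b - a) - (a + RtoC t * (b - a)) - RtoC h * (b - a))%C with (RtoC 0).
  rewrite Cmod_0. generalize (Rabs_pos h). nra.
  rewrite RtoC_plus. ring.
Qed.

Lemma RPlus (x y : R) : plus x y = x + y. Proof. reflexivity. Qed.
Lemma RScal (x y : R) : scal x y = x * y. Proof. reflexivity. Qed.
Lemma RMinus (x y : R) : minus x y = x - y. Proof. reflexivity. Qed.

Lemma SegCont_ex (f : C -> C) (a b : C) (x y : R) : SegCont f a b -> 0 <= x <= 1 -> 0 <= y <= 1 ->
  ex_RInt (fun t => fst (f (lin a b t))) x y /\ ex_RInt (fun t => snd (f (lin a b t))) x y.
Proof.
  intros H Hx Hy. split; apply (ex_RInt_continuous (V := R_CompleteNormedModule)); intros z Hz.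
  - apply Pcont_fst. eapply Pcont_comp. apply Rdiff_lin. apply H.
    split. apply Rle_trans with (Rmin x y). apply Rmin_glb; lra. lra.
    apply Rle_trans with (Rmax x y). lra. apply Rmax_lub; lra.
  - apply Pcont_snd. eapply Pcont_comp. apply Rdiff_lin. apply H.
    split. apply Rle_trans with (Rmin x y). apply Rmin_glb; lra. lra.
    apply Rle_trans with (Rmax x y). lra. apply Rmax_lub; lra.
Qed.

Lemma CI_ext (g1 g2 : R -> C) (a b : R) : (forall t, g1 t = g2 t) -> CI g1 a b = CI g2 a b.
Proof.
  intros H. unfold CI. f_equal; apply RInt_ext; intros; rewrite H; reflexivity.
Qed.

Lemma CI_chasles (g : R -> C) (a b c : R) :
  ex_RInt (fun t => fst (g t)) a b -> ex_RInt (fun t => snd (g t)) a b ->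
  ex_RInt (fun t => fst (g t)) b c -> ex_RInt (fun t => snd (g t)) b c ->
  CI g a c = (CI g a b + CI g b c)%C.
Proof.
  intros H1 H2 H3 H4. unfold CI. apply C_eq; simpl.
  rewrite <- (RInt_Chasles (V := R_CompleteNormedModule) _ a b c H1 H3). reflexivity.
  rewrite <- (RInt_Chasles (V := R_CompleteNormedModule) _ a b c H2 H4). reflexivity.
Qed.

Lemma CI_comp_lin (g : R -> C) (u v : R) :
  ex_RInt (fun t => fst (g t)) v (u + v) -> ex_RInt (fun t => snd (g t)) v (u + v) ->
  ex_RInt (fun t => fst (g (u * t + v))) 0 1 -> ex_RInt (fun t => snd (g (u * t + v))) 0 1 ->
  (RtoC u * CI (fun t => g (u * t + v)%R) 0 1)%C = CI g v (u + v).
Proof.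
  intros H1 H2 H3 H4. unfold CI.
  assert (E1 := RInt_comp_lin (fun t => fst (g t)) u v 0 1).
  assert (E2 := RInt_comp_lin (fun t => snd (g t)) u v 0 1).
  replace (u * 0 + v) with v in E1, E2 by ring. replace (u * 1 + v) with (u + v) in E1, E2 by ring.
  specialize (E1 H1). specialize (E2 H2).
  rewrite (RInt_scal (V := R_CompleteNormedModule)) in E1 by exact H3.
  rewrite (RInt_scal (V := R_CompleteNormedModule)) in E2 by exact H4.
  rewrite RScal in E1, E2.
  apply C_eq; simpl. rewrite <- E1. ring. rewrite <- E2. ring.
Qed.


Lemma CI_swap (g : R -> C) (a b : R) :
  ex_RInt (fun t => fst (g t)) a b -> ex_RInt (fun t => snd (g t)) a b ->
  CI g b a = (- CI g a b)%C.
Proof.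
  intros H1 H2. unfold CI. apply C_eq; simpl.
  rewrite <- (opp_RInt_swap (V := R_CompleteNormedModule) _ a b H1). reflexivity.
  rewrite <- (opp_RInt_swap (V := R_CompleteNormedModule) _ a b H2). reflexivity.
Qed.

Lemma lin_lin a b x y t : lin (lin a b x) (lin a b y) t = lin a b (x + t * (y - x)).
Proof. unfold lin. rewrite RtoC_plus, RtoC_mult, RtoC_minus. ring. Qed.

Lemma lin_0 a b : lin a b 0 = a. Proof. unfold lin. ring. Qed.
Lemma lin_1 a b : lin a b 1 = b. Proof. unfold lin. ring. Qed.

Lemma SegCont_sub f a b x y : SegCont f a b -> 0 <= x <= 1 -> 0 <= y <= 1 ->
  SegCont f (lin a b x) (lin a b y).
Proof.
  intros H Hx Hy t Ht. rewrite lin_lin. apply H.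
  destruct (Rle_dec x y).
  split; nra. split; nra.
Qed.

Lemma SegCont_rev f a b : SegCont f a b -> SegCont f b a.
Proof.
  intros H. generalize (SegCont_sub f a b 1 0 H). rewrite lin_0, lin_1. intro H'. apply H'; lra.
Qed.

Lemma seg_split f a b s : SegCont f a b -> 0 <= s <= 1 ->
  seg f a b = (seg f a (lin a b s) + seg f (lin a b s) b)%C.
Proof.
  intros Hc Hs. set (m := lin a b s).
  set (h := fun t => f (lin a b t)).
  assert (E1 : forall t, lin a b (s * t + 0) = lin a m t).
  { intro t. unfold m, lin. rewrite RtoC_plus, !RtoC_mult. ring. }
  assert (E2 : forall t, lin a b ((1 - s) * t + s) = lin m b t).
  { intro t. unfold m, lin. rewrite RtoC_plus, !RtoC_mult, RtoC_minus. ring. }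
  assert (Cam : SegCont f a m). { unfold m. rewrite <- (lin_0 a b) at 1. apply SegCont_sub; auto; lra. }
  assert (Cmb : SegCont f m b). { unfold m. rewrite <- (lin_1 a b) at 2. apply SegCont_sub; auto; lra. }
  destruct (SegCont_ex f a b 0 s Hc) as [X1 X2]; try lra.
  destruct (SegCont_ex f a b s 1 Hc) as [X3 X4]; try lra.
  destruct (SegCont_ex f a m 0 1 Cam) as [Y1 Y2]; try lra.
  destruct (SegCont_ex f m b 0 1 Cmb) as [Y3 Y4]; try lra.
  assert (C1 : (RtoC s * CI (fun t => h (s * t + 0)%R) 0 1)%C = CI h 0 (s + 0)).
  { apply CI_comp_lin; unfold h.
    - replace (s + 0) with s by ring. exact X1.
    - replace (s + 0) with s by ring. exact X2.
    - replace (fun t => fst (f (lin a b (s * t + 0)))) with (fun t => fst (f (lin a m t)))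
        by (extensionality t; rewrite E1; reflexivity). exact Y1.
    - replace (fun t => snd (f (lin a b (s * t + 0)))) with (fun t => snd (f (lin a m t)))
        by (extensionality t; rewrite E1; reflexivity). exact Y2. }
  assert (C2 : (RtoC (1 - s) * CI (fun t => h ((1 - s) * t + s)%R) 0 1)%C = CI h s (1 - s + s)).
  { apply CI_comp_lin; unfold h.
    - replace (1 - s + s) with 1 by ring. exact X3.
    - replace (1 - s + s) with 1 by ring. exact X4.
    - replace (fun t => fst (f (lin a b ((1 - s) * t + s)))) with (fun t => fst (f (lin m b t)))
        by (extensionality t; rewrite E2; reflexivity). exact Y3.
    - replace (fun t => snd (f (lin a b ((1 - s) * t + s)))) with (fun t => snd (f (lin m b t)))
        by (extensionality t; rewrite E2; reflexivity). exact Y4. }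
  replace (s + 0) with s in C1 by ring. replace (1 - s + s) with 1 in C2 by ring.
  rewrite (CI_ext _ (fun t => f (lin a m t))) in C1 by (intro t; unfold h; rewrite E1; reflexivity).
  rewrite (CI_ext _ (fun t => f (lin m b t))) in C2 by (intro t; unfold h; rewrite E2; reflexivity).
  unfold seg. fold h.
  rewrite (CI_chasles h 0 s 1) by assumption.
  rewrite <- C1, <- C2. unfold m, lin. rewrite RtoC_minus. ring.
Qed.

Lemma seg_rev f a b : SegCont f a b -> seg f b a = (- seg f a b)%C.
Proof.
  intros Hc. set (h := fun t => f (lin a b t)).
  assert (E : forall t, lin a b (-1 * t + 1) = lin b a t).
  { intro t. unfold lin. apply C_eq; simpl; ring. }
  destruct (SegCont_ex f a b 0 1 Hc) as [X1 X2]; try lra.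
  destruct (SegCont_ex f b a 0 1 (SegCont_rev f a b Hc)) as [Y1 Y2]; try lra.
  assert (C1 : (RtoC (-1) * CI (fun t => h (-1 * t + 1)%R) 0 1)%C = CI h 1 (-1 + 1)).
  { apply CI_comp_lin; unfold h.
    - replace (-1 + 1) with 0 by ring. apply ex_RInt_swap. exact X1.
    - replace (-1 + 1) with 0 by ring. apply ex_RInt_swap. exact X2.
    - replace (fun t => fst (f (lin a b (-1 * t + 1)))) with (fun t => fst (f (lin b a t)))
        by (extensionality t; rewrite E; reflexivity). exact Y1.
    - replace (fun t => snd (f (lin a b (-1 * t + 1)))) with (fun t => snd (f (lin b a t)))
        by (extensionality t; rewrite E; reflexivity). exact Y2. }
  replace (-1 + 1) with 0 in C1 by ring.
  rewrite (CI_ext _ (fun t => f (lin b a t))) in C1 by (intro t; unfold h; rewrite E; reflexivity).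
  rewrite (CI_swap h 0 1 X1 X2) in C1.
  unfold seg. fold h.
  replace (CI (fun t => f (lin b a t)) 0 1) with (CI h 0 1).
  ring.
  replace (CI (fun t : R => f (lin b a t)) 0 1) with (- (RtoC (-1) * CI (fun t : R => f (lin b a t)) 0 1))%C.
  rewrite C1. ring. apply C_eq; simpl; ring.
Qed.

Lemma seg_bound f a b M : SegCont f a b -> (forall t, 0 <= t <= 1 -> Cmod (f (lin a b t)) <= M) ->
  Cmod (seg f a b) <= 2 * M * Cmod (b - a).
Proof.
  intros Hc HM. destruct (SegCont_ex f a b 0 1 Hc) as [X1 X2]; try lra.
  unfold seg. rewrite Cmod_mult.
  assert (H : Cmod (CI (fun t => f (lin a b t)) 0 1) <= 2 * M).
  { eapply Rle_trans. apply Cmod_le_abs. unfold CI; simpl.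
    assert (A1 := abs_RInt_le_const _ 0 1 M ltac:(lra) X1).
    assert (A2 := abs_RInt_le_const _ 0 1 M ltac:(lra) X2).
    assert (B1 : Rabs (RInt (fun t => fst (f (lin a b t))) 0 1) <= (1 - 0) * M).
    { apply A1. intros t Ht. eapply Rle_trans. apply abs_fst_le. auto. }
    assert (B2 : Rabs (RInt (fun t => snd (f (lin a b t))) 0 1) <= (1 - 0) * M).
    { apply A2. intros t Ht. eapply Rle_trans. apply abs_snd_le. auto. }
    lra. }
  generalize (Cmod_ge_0 (b - a)). nra.
Qed.

Lemma seg_minus f g a b : SegCont f a b -> SegCont g a b ->
  seg (fun z => f z - g z)%C a b = (seg f a b - seg g a b)%C.
Proof.
  intros Hf Hg. destruct (SegCont_ex f a b 0 1 Hf) as [X1 X2]; try lra.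
  destruct (SegCont_ex g a b 0 1 Hg) as [Y1 Y2]; try lra.
  unfold seg.
  assert (E : CI (fun t => (f (lin a b t) - g (lin a b t))%C) 0 1 =
     (CI (fun t => f (lin a b t)) 0 1 - CI (fun t => g (lin a b t)) 0 1)%C).
  { unfold CI. apply C_eq; simpl.
    - transitivity (minus (RInt (fun t => fst (f (lin a b t))) 0 1) (RInt (fun t => fst (g (lin a b t))) 0 1)); [|reflexivity].
      rewrite <- (RInt_minus (V := R_CompleteNormedModule) _ _ 0 1 X1 Y1).
      apply RInt_ext. intros. simpl. rewrite RMinus. ring.
    - transitivity (minus (RInt (fun t => snd (f (lin a b t))) 0 1) (RInt (fun t => snd (g (lin a b t))) 0 1)); [|reflexivity].
      rewrite <- (RInt_minus (V := R_CompleteNormedModule) _ _ 0 1 X2 Y2).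
      apply RInt_ext. intros. simpl. rewrite RMinus. ring. }
  rewrite E. ring.
Qed.

Lemma RInt_affine A B : RInt (fun t => A + B * t) 0 1 = A + B / 2.
Proof.
  assert (H : is_RInt (V := R_CompleteNormedModule) (fun t => A + B * t) 0 1
     (minus ((fun t => A * t + B * t ^ 2 / 2) 1) ((fun t => A * t + B * t ^ 2 / 2) 0))).
  { apply (is_RInt_derive (V := R_CompleteNormedModule) (fun t => A * t + B * t ^ 2 / 2)).
    - intros x _. auto_derive. auto. field.
    - intros x _. apply (ex_derive_continuous (K := R_AbsRing) (V := R_NormedModule)). auto_derive. auto. }
  apply is_RInt_unique in H. rewrite H. rewrite RMinus. simpl. field.
Qed.

Lemma seg_affine al be a b : seg (fun z => al + be * z)%C a b = ((b - a) * (al + be * (a + b) / 2))%C.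
Proof.
  unfold seg, CI.
  rewrite (RInt_ext _ (fun t => fst (al + be * a)%C + fst (be * (b - a))%C * t)).
  rewrite (RInt_ext (fun t => snd (al + be * lin a b t)%C) (fun t => snd (al + be * a)%C + snd (be * (b - a))%C * t)).
  rewrite !RInt_affine. apply C_eq; simpl; field.
  intros; unfold lin; simpl; ring.
  intros; unfold lin; simpl; ring.
Qed.

Lemma seg_const c a b : seg (fun _ => c) a b = ((b - a) * c)%C.
Proof.
  replace (fun _ : C => c) with (fun z : C => c + 0 * z)%C by (extensionality z; ring).
  rewrite seg_affine. apply C_eq; simpl; field.
Qed.

Definition tri (f : C -> C) (a b c : C) : C := (seg f a b + seg f b c + seg f c a)%C.

Lemma tri_affine al be a b c : tri (fun z => al + be * z)%C a b c = 0%C.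
Proof. unfold tri. rewrite !seg_affine. field. Qed.

Lemma tri_minus f g a b c : SegCont f a b -> SegCont f b c -> SegCont f c a ->
  SegCont g a b -> SegCont g b c -> SegCont g c a ->
  tri (fun z => f z - g z)%C a b c = (tri f a b c - tri g a b c)%C.
Proof. intros. unfold tri. rewrite !seg_minus by auto. ring. Qed.

Definition mid (a b : C) : C := lin a b (1/2).

Lemma tri_mid f a b c : SegCont f a b -> SegCont f b c -> SegCont f c a ->
  SegCont f (mid a b) (mid c a) -> SegCont f (mid b c) (mid a b) -> SegCont f (mid c a) (mid b c) ->
  tri f a b c = (tri f a (mid a b) (mid c a) + tri f (mid a b) b (mid b c)
                 + tri f (mid c a) (mid b c) c + tri f (mid a b) (mid b c) (mid c a))%C.
Proof.
  intros H1 H2 H3 H4 H5 H6. unfold tri.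
  rewrite (seg_split f a b (1/2)) by (auto; lra).
  rewrite (seg_split f b c (1/2)) by (auto; lra).
  rewrite (seg_split f c a (1/2)) by (auto; lra).
  fold (mid a b) (mid b c) (mid c a).
  rewrite (seg_rev f (mid c a) (mid a b)) by (apply SegCont_rev; auto).
  rewrite (seg_rev f (mid a b) (mid b c)) by (apply SegCont_rev; auto).
  rewrite (seg_rev f (mid b c) (mid c a)) by (apply SegCont_rev; auto).
  ring.
Qed.


Record T3 := mkT { ta : C; tb : C; tc : C }.
Definition triT f t := tri f (ta t) (tb t) (tc t).
Definition perimT t := Cmod (tb t - ta t) + Cmod (tc t - tb t) + Cmod (ta t - tc t).
Definition sub1 t := mkT (ta t) (mid (ta t) (tb t)) (mid (tc t) (ta t)).
Definition sub2 t := mkT (mid (ta t) (tb t)) (tb t) (mid (tb t) (tc t)).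
Definition sub3 t := mkT (mid (tc t) (ta t)) (mid (tb t) (tc t)) (tc t).
Definition sub4 t := mkT (mid (ta t) (tb t)) (mid (tb t) (tc t)) (mid (tc t) (ta t)).

Definition pick f t :=
  if Rle_dec (Cmod (triT f t) / 4) (Cmod (triT f (sub1 t))) then sub1 t else
  if Rle_dec (Cmod (triT f t) / 4) (Cmod (triT f (sub2 t))) then sub2 t else
  if Rle_dec (Cmod (triT f t) / 4) (Cmod (triT f (sub3 t))) then sub3 t else sub4 t.

Fixpoint nest f t k := match k with O => t | S k => pick f (nest f t k) end.

Lemma Cmod_half (y x : C) : x = (RtoC (1/2) * y)%C -> Cmod x = Cmod y / 2.
Proof. intros ->. rewrite Cmod_Rmult, Rabs_pos_eq by lra. field. Qed.

Lemma mid_eq a b : mid a b = (a + RtoC (1/2) * (b - a))%C.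
Proof. reflexivity. Qed.

Ltac half_tac x y := rewrite (Cmod_half y x) by (rewrite ?mid_eq; apply C_eq; simpl; field).

Lemma perim_sub1 t : perimT (sub1 t) = perimT t / 2.
Proof.
  destruct t as [a b c]. unfold perimT, sub1; simpl.
  half_tac (mid a b - a)%C (b - a)%C. half_tac (mid c a - mid a b)%C (c - b)%C. half_tac (a - mid c a)%C (a - c)%C. field.
Qed.
Lemma perim_sub2 t : perimT (sub2 t) = perimT t / 2.
Proof.
  destruct t as [a b c]. unfold perimT, sub2; simpl.
  half_tac (b - mid a b)%C (b - a)%C. half_tac (mid b c - b)%C (c - b)%C. half_tac (mid a b - mid b c)%C (a - c)%C. field.
Qed.
Lemma perim_sub3 t : perimT (sub3 t) = perimT t / 2.
Proof.
  destruct t as [a b c]. unfold perimT, sub3; simpl.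
  half_tac (mid b c - mid c a)%C (b - a)%C. half_tac (c - mid b c)%C (c - b)%C. half_tac (mid c a - c)%C (a - c)%C. field.
Qed.
Lemma perim_sub4 t : perimT (sub4 t) = perimT t / 2.
Proof.
  destruct t as [a b c]. unfold perimT, sub4; simpl.
  half_tac (mid b c - mid a b)%C (c - a)%C. half_tac (mid c a - mid b c)%C (a - b)%C. half_tac (mid a b - mid c a)%C (b - c)%C.
  rewrite (Cmod_sym c a), (Cmod_sym a b), (Cmod_sym b c). field.
Qed.

Lemma perim_pick f t : perimT (pick f t) = perimT t / 2.
Proof.
  unfold pick. destruct Rle_dec. apply perim_sub1. destruct Rle_dec. apply perim_sub2.
  destruct Rle_dec. apply perim_sub3. apply perim_sub4.
Qed.

Lemma perim_ge0 t : 0 <= perimT t.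
Proof. unfold perimT. generalize (Cmod_ge_0 (tb t - ta t)) (Cmod_ge_0 (tc t - tb t)) (Cmod_ge_0 (ta t - tc t)). lra. Qed.

Lemma perim_b t : Cmod (tb t - ta t) <= perimT t.
Proof. unfold perimT. generalize (Cmod_ge_0 (tb t - ta t)) (Cmod_ge_0 (tc t - tb t)) (Cmod_ge_0 (ta t - tc t)). lra. Qed.

Lemma perim_c t : Cmod (tc t - ta t) <= perimT t.
Proof. unfold perimT. rewrite Cmod_sym. generalize (Cmod_ge_0 (tb t - ta t)) (Cmod_ge_0 (tc t - tb t)) (Cmod_ge_0 (ta t - tc t)). lra. Qed.

Lemma pick_ta f t : Cmod (ta (pick f t) - ta t) <= perimT t.
Proof.
  assert (Hab : Cmod (mid (ta t) (tb t) - ta t) <= perimT t).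
  { half_tac (mid (ta t) (tb t) - ta t)%C (tb t - ta t)%C. generalize (perim_b t) (Cmod_ge_0 (tb t - ta t)). lra. }
  assert (Hca : Cmod (mid (tc t) (ta t) - ta t) <= perimT t).
  { half_tac (mid (tc t) (ta t) - ta t)%C (tc t - ta t)%C. generalize (perim_c t) (Cmod_ge_0 (tc t - ta t)). lra. }
  assert (H0 : Cmod (ta t - ta t) <= perimT t).
  { replace (ta t - ta t)%C with (RtoC 0) by ring. rewrite Cmod_0. apply perim_ge0. }
  unfold pick. destruct Rle_dec. exact H0. destruct Rle_dec. exact Hab.
  destruct Rle_dec. exact Hca. exact Hab.
Qed.

Lemma lin_dist u v w s : 0 <= s <= 1 -> Cmod (lin u v s - w) <= (1 - s) * Cmod (u - w) + s * Cmod (v - w).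
Proof.
  intros Hs. replace (lin u v s - w)%C with (RtoC (1 - s) * (u - w) + RtoC s * (v - w))%C
    by (unfold lin; rewrite RtoC_minus; ring).
  eapply Rle_trans. apply Cmod_triangle. rewrite !Cmod_Rmult, !Rabs_pos_eq by lra. lra.
Qed.

Lemma edge_dist t u v s : 0 <= s <= 1 ->
  (u = ta t \/ u = tb t \/ u = tc t) -> (v = ta t \/ v = tb t \/ v = tc t) ->
  Cmod (lin u v s - ta t) <= perimT t.
Proof.
  intros Hs Hu Hv.
  assert (Hx : forall x, (x = ta t \/ x = tb t \/ x = tc t) -> Cmod (x - ta t) <= perimT t).
  { intros x [E|[E|E]]; rewrite E. replace (ta t - ta t)%C with (RtoC 0) by ring. rewrite Cmod_0. apply perim_ge0.
    apply perim_b. apply perim_c. }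
  eapply Rle_trans. apply lin_dist; auto.
  generalize (Hx u Hu) (Hx v Hv). nra.
Qed.

Section Goursat.
Variable K : C -> Prop.
Hypothesis Kconv : forall u v s, K u -> K v -> 0 <= s <= 1 -> K (lin u v s).
Hypothesis Kclosed : forall p, (forall eps, 0 < eps -> exists x, K x /\ Cmod (x - p) < eps) -> K p.
Variable f : C -> C.
Hypothesis fdiff : forall z, K z -> exists d, Cdiff f z d.

Lemma K_segcont u v : K u -> K v -> SegCont f u v.
Proof. intros Hu Hv s Hs. destruct (fdiff (lin u v s)) as [d Hd]. apply Kconv; auto. eapply Cdiff_cont; eauto. Qed.

Definition InK t := K (ta t) /\ K (tb t) /\ K (tc t).

Lemma InK_mid u v : K u -> K v -> K (mid u v).
Proof. intros. apply Kconv; auto; lra. Qed.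

Lemma pick_InK t : InK t -> InK (pick f t).
Proof.
  intros [Ha [Hb Hc]].
  assert (M1 := InK_mid _ _ Ha Hb). assert (M2 := InK_mid _ _ Hb Hc). assert (M3 := InK_mid _ _ Hc Ha).
  unfold pick. destruct Rle_dec. unfold InK, sub1; simpl; auto.
  destruct Rle_dec. unfold InK, sub2; simpl; auto.
  destruct Rle_dec. unfold InK, sub3; simpl; auto.
  unfold InK, sub4; simpl; auto.
Qed.

Lemma pick_tri t : InK t -> Cmod (triT f t) <= 4 * Cmod (triT f (pick f t)).
Proof.
  intros [Ha [Hb Hc]].
  assert (M1 := InK_mid _ _ Ha Hb). assert (M2 := InK_mid _ _ Hb Hc). assert (M3 := InK_mid _ _ Hc Ha).
  assert (E : triT f t = (triT f (sub1 t) + triT f (sub2 t) + triT f (sub3 t) + triT f (sub4 t))%C).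
  { unfold triT, sub1, sub2, sub3, sub4; simpl. apply tri_mid; apply K_segcont; auto. }
  assert (Hs : Cmod (triT f t) <= Cmod (triT f (sub1 t)) + Cmod (triT f (sub2 t)) + Cmod (triT f (sub3 t)) + Cmod (triT f (sub4 t))).
  { rewrite E. eapply Rle_trans. apply Cmod_triangle. generalize (Cmod_triangle3 (triT f (sub1 t)) (triT f (sub2 t)) (triT f (sub3 t))). lra. }
  unfold pick. destruct Rle_dec. lra. destruct Rle_dec. lra. destruct Rle_dec. lra. lra.
Qed.

Lemma nest_props t0 : InK t0 -> forall k,
  InK (nest f t0 k) /\ perimT (nest f t0 k) = perimT t0 * (/2) ^ k /\
  Cmod (triT f t0) * ((/2) ^ k) ^ 2 <= Cmod (triT f (nest f t0 k)).
Proof.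
  intros H0. induction k as [|k [IH1 [IH2 IH3]]]; simpl.
  - split; auto. split. ring. lra.
  - split. apply pick_InK; auto. split. rewrite perim_pick, IH2. field.
    generalize (pick_tri _ IH1). intro Hp.
    replace (((/2) * (/2) ^ k) ^ 2) with (((/2) ^ k) ^ 2 / 4) by field. lra.
Qed.

Lemma nest_cauchy t0 : InK t0 -> forall k i,
  Cmod (ta (nest f t0 (k + i)) - ta (nest f t0 k)) <= 2 * perimT t0 * (/2) ^ k - 2 * perimT t0 * (/2) ^ (k + i).
Proof.
  intros H0 k i. induction i.
  - rewrite Nat.add_0_r. replace (ta (nest f t0 k) - ta (nest f t0 k))%C with (RtoC 0) by ring.
    rewrite Cmod_0. lra.
  - rewrite Nat.add_succ_r. simpl.
    eapply Rle_trans. apply Cmod_dist_tri with (b := ta (nest f t0 (k + i))).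
    generalize (pick_ta f (nest f t0 (k + i))). destruct (nest_props t0 H0 (k + i)) as [_ [E _]].
    rewrite E. lra.
Qed.

Lemma half_pow_small P eps : 0 < eps -> exists k, P * (/2) ^ k < eps.
Proof.
  intros He. destruct (Rle_dec P 0). exists O. simpl. lra.
  destruct (pow_lt_1_zero (/2)) with (eps / P) as [N HN].
  rewrite Rabs_pos_eq; lra. apply Rdiv_lt_0_compat; lra.
  exists N. specialize (HN N (le_n N)). rewrite Rabs_pos_eq in HN.
  apply Rmult_lt_compat_l with (r := P) in HN. replace (P * (eps / P)) with eps in HN by (field; lra). auto. lra.
  apply pow_le. lra.
Qed.

Lemma half_pow_pos k : 0 < (/2) ^ k.
Proof. apply pow_lt. lra. Qed.

Lemma half_pow_le1 n : (/2) ^ n <= 1.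
Proof. induction n; simpl. lra. generalize (half_pow_pos n). nra. Qed.

Lemma half_pow_mono k m : (k <= m)%nat -> (/2) ^ m <= (/2) ^ k.
Proof.
  intros H. replace m with (k + (m - k))%nat by lia. rewrite pow_add.
  generalize (half_pow_pos k). assert ((/2) ^ (m - k) <= 1) by apply half_pow_le1. 
  assert (0 <= (/2) ^ (m-k)) by (apply pow_le; lra). nra.
Qed.

Lemma nest_limit t0 : InK t0 -> exists p, K p /\
  forall k, Cmod (ta (nest f t0 k) - p) <= 4 * perimT t0 * (/2) ^ k.
Proof.
  intros H0. set (P := perimT t0). assert (HP : 0 <= P) by apply perim_ge0.
  set (a := fun k => ta (nest f t0 k)).
  assert (HC : forall k m, (k <= m)%nat -> Cmod (a m - a k) <= 2 * P * (/2) ^ k).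
  { intros k m Hkm. replace m with (k + (m - k))%nat by lia. unfold a.
    generalize (nest_cauchy t0 H0 k (m - k)). generalize (half_pow_pos (k + (m - k))). fold P. nra. }
  assert (HC' : forall k m, (k <= m)%nat -> Rabs (fst (a m) - fst (a k)) <= 2 * P * (/2) ^ k
      /\ Rabs (snd (a m) - snd (a k)) <= 2 * P * (/2) ^ k).
  { intros k m Hkm. specialize (HC k m Hkm).
    replace (fst (a m) - fst (a k)) with (fst (a m - a k)%C) by (simpl; ring).
    replace (snd (a m) - snd (a k)) with (snd (a m - a k)%C) by (simpl; ring).
    split; eapply Rle_trans; [apply abs_fst_le| | apply abs_snd_le|]; auto. }
  assert (Hcc : forall (u : nat -> R), (forall k m, (k <= m)%nat -> Rabs (u m - u k) <= 2 * P * (/2) ^ k) ->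
     {l | Un_cv u l /\ forall k, Rabs (u k - l) <= 2 * P * (/2) ^ k}).
  { intros u Hu. destruct (Rcomplete.R_complete u) as [l Hl].
    - intros eps Heps. destruct (half_pow_small (2 * P) eps Heps) as [N HN]. exists N.
      intros n m Hn Hm. unfold Rdist. destruct (Nat.le_ge_cases n m).
      + rewrite Rabs_minus_sym. eapply Rle_lt_trans. apply Hu; auto.
        eapply Rle_lt_trans; [|apply HN]. apply Rmult_le_compat_l. lra. apply half_pow_mono; lia.
      + eapply Rle_lt_trans. apply Hu; auto.
        eapply Rle_lt_trans; [|apply HN]. apply Rmult_le_compat_l. lra. apply half_pow_mono; lia.
    - exists l. split; auto. intros k.
      apply Rnot_lt_le. intro Hlt.
      set (e := Rabs (u k - l) - 2 * P * (/2) ^ k).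
      destruct (Hl e) as [N HN]. unfold e; lra.
      specialize (HN (Nat.max N k) (Nat.le_max_l N k)). unfold Rdist in HN.
      specialize (Hu k (Nat.max N k) (Nat.le_max_r N k)).
      generalize (Rabs_triang (u k - u (Nat.max N k)) (u (Nat.max N k) - l)).
      replace (u k - u (Nat.max N k) + (u (Nat.max N k) - l)) with (u k - l) by ring.
      rewrite Rabs_minus_sym in Hu. unfold e in HN. lra. }
  destruct (Hcc (fun k => fst (a k))) as [p1 [_ Hp1]]. intros; apply HC'; auto.
  destruct (Hcc (fun k => snd (a k))) as [p2 [_ Hp2]]. intros; apply HC'; auto.
  exists (p1, p2).
  assert (Hd : forall k, Cmod (a k - (p1, p2)) <= 4 * P * (/2) ^ k).
  { intros k. eapply Rle_trans. apply Cmod_le_abs. simpl.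
    generalize (Hp1 k) (Hp2 k). simpl. intros A B.
    replace (fst (a k) + - p1) with (fst (a k) - p1) by ring.
    replace (snd (a k) + - p2) with (snd (a k) - p2) by ring. lra. }
  split; auto.
  apply Kclosed. intros eps Heps.
  destruct (half_pow_small (4 * P) eps Heps) as [k Hk].
  exists (a k). split. unfold a. apply (nest_props t0 H0 k). eapply Rle_lt_trans. apply Hd. auto.
Qed.

Lemma Ccont_affine al be z : Ccont (fun w => al + be * w)%C z.
Proof.
  apply Cdiff_cont with (d := (0 + be * 1)%C).
  apply Cdiff_plus. apply Cdiff_const. apply Cdiff_scal. apply Cdiff_id.
Qed.

Theorem goursat a b c : K a -> K b -> K c -> tri f a b c = 0%C.
Proof.
  intros Ha Hb Hc. set (t0 := mkT a b c).
  assert (H0 : InK t0) by (unfold InK; simpl; auto).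
  change (tri f a b c) with (triT f t0).
  set (P := perimT t0). assert (HP : 0 <= P) by apply perim_ge0.
  destruct (nest_limit t0 H0) as [p [Kp Hp]].
  destruct (fdiff p Kp) as [d Hd].
  assert (Hest : forall eps, 0 < eps -> Cmod (triT f t0) <= 10 * eps * P ^ 2).
  { intros eps Heps. destruct (Hd eps Heps) as [del [Hdel Hw]].
    destruct (half_pow_small (5 * P) del Hdel) as [k Hk].
    destruct (nest_props t0 H0 k) as [[Ka [Kb Kc]] [Eper Etri]].
    set (tk := nest f t0 k) in *. fold P in Eper, Hk.
    set (hk := (/2) ^ k) in *.
    assert (Hhk : 0 < hk) by apply half_pow_pos.
    set (al := (f p - d * p)%C).
    set (e := fun z => (f z - (al + d * z))%C).
    assert (Hcl : forall u v s, 0 <= s <= 1 -> (u = ta tk \/ u = tb tk \/ u = tc tk) ->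
       (v = ta tk \/ v = tb tk \/ v = tc tk) -> Cmod (e (lin u v s)) <= eps * (5 * P * hk)).
    { intros u v s Hs Hu Hv.
      assert (Hz : Cmod (lin u v s - p) <= 5 * P * hk).
      { eapply Rle_trans. apply Cmod_dist_tri with (b := ta tk).
        generalize (edge_dist tk u v s Hs Hu Hv) (Hp k). fold tk hk. rewrite Eper. intros A B. fold P in B. nra. }
      unfold e, al. replace (f (lin u v s) - (f p - d * p + d * lin u v s))%C with
        (f (lin u v s) - f p - d * (lin u v s - p))%C by ring.
      eapply Rle_trans. apply Hw. lra. apply Rmult_le_compat_l; lra. }
    assert (Scf : forall u v, K u -> K v -> SegCont (fun z => al + d * z)%C u v).
    { intros u v _ _ s _. apply Ccont_affine. }
    assert (Et : triT f tk = tri e (ta tk) (tb tk) (tc tk)).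
    { unfold e. rewrite tri_minus by (apply K_segcont || apply Scf; auto).
      rewrite tri_affine. unfold triT. ring. }
    assert (Ses : forall u v, K u -> K v -> SegCont e u v).
    { intros u v Ku Kv s Hs. unfold e. intros eps' Heps'.
      destruct (K_segcont u v Ku Kv s Hs (eps'/2)) as [d1 [Hd1 H1]]. lra.
      destruct (Ccont_affine al d (lin u v s) (eps'/2)) as [d2 [Hd2 H2]]. lra.
      exists (Rmin d1 d2). split. apply Rmin_pos; auto. intros w Hw'.
      replace (f w - (al + d * w) - (f (lin u v s) - (al + d * lin u v s)))%C with
        ((f w - f (lin u v s)) - ((al + d * w) - (al + d * lin u v s)))%C by ring.
      eapply Rle_lt_trans. apply Cmod_minus_le.
      generalize (H1 w (Rlt_le_trans _ _ _ Hw' (Rmin_l _ _))) (H2 w (Rlt_le_trans _ _ _ Hw' (Rmin_r _ _))). lra. }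
    assert (Htk : Cmod (triT f tk) <= 10 * eps * P ^ 2 * hk ^ 2).
    { rewrite Et. unfold tri.
      assert (B1 := seg_bound e (ta tk) (tb tk) _ (Ses _ _ Ka Kb) (fun s Hs => Hcl _ _ s Hs (or_introl eq_refl) (or_intror (or_introl eq_refl)))).
      assert (B2 := seg_bound e (tb tk) (tc tk) _ (Ses _ _ Kb Kc) (fun s Hs => Hcl _ _ s Hs (or_intror (or_introl eq_refl)) (or_intror (or_intror eq_refl)))).
      assert (B3 := seg_bound e (tc tk) (ta tk) _ (Ses _ _ Kc Ka) (fun s Hs => Hcl _ _ s Hs (or_intror (or_intror eq_refl)) (or_introl eq_refl))).
      eapply Rle_trans. apply Cmod_triangle3.
      assert (Ep : Cmod (tb tk - ta tk) + Cmod (tc tk - tb tk) + Cmod (ta tk - tc tk) = P * hk) by exact Eper.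
      assert (Hm : 2 * (eps * (5 * P * hk)) * Cmod (tb tk - ta tk) + 2 * (eps * (5 * P * hk)) * Cmod (tc tk - tb tk)
         + 2 * (eps * (5 * P * hk)) * Cmod (ta tk - tc tk) = 10 * eps * P ^ 2 * hk ^ 2).
      { replace (2 * (eps * (5 * P * hk)) * Cmod (tb tk - ta tk) + 2 * (eps * (5 * P * hk)) * Cmod (tc tk - tb tk)
         + 2 * (eps * (5 * P * hk)) * Cmod (ta tk - tc tk)) with
          (2 * (eps * (5 * P * hk)) * (Cmod (tb tk - ta tk) + Cmod (tc tk - tb tk) + Cmod (ta tk - tc tk))) by ring.
        rewrite Ep. ring. }
      lra. }
    assert (Hfin : Cmod (triT f t0) * hk ^ 2 <= 10 * eps * P ^ 2 * hk ^ 2) by lra.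
    apply Rmult_le_reg_r with (hk ^ 2). apply pow_lt; auto. lra. }
  apply Cmod_eq_0. apply Rle_antisym; [|apply Cmod_ge_0].
  apply Rnot_lt_le. intro Hpos.
  set (T := Cmod (triT f t0)) in *.
  specialize (Hest (T / (20 * P ^ 2 + 1))).
  assert (Hq : 0 < 20 * P ^ 2 + 1) by nra.
  assert (Hx : 0 < T / (20 * P ^ 2 + 1)) by (apply Rdiv_lt_0_compat; auto).
  specialize (Hest Hx).
  assert (Hy : 10 * (T / (20 * P ^ 2 + 1)) * P ^ 2 < T).
  { apply Rmult_lt_reg_r with (20 * P ^ 2 + 1); auto.
    replace (10 * (T / (20 * P ^ 2 + 1)) * P ^ 2 * (20 * P ^ 2 + 1)) with (10 * T * P ^ 2) by (field; lra).
    nra. }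
  lra.
Qed.

End Goursat.


Definition Ceq_dec (a b : C) : {a = b} + {a <> b}.
Proof.
  destruct a as [a1 a2], b as [b1 b2].
  destruct (Req_EM_T a1 b1) as [E1|E1]; [destruct (Req_EM_T a2 b2) as [E2|E2]|].
  left; subst; reflexivity.
  right; intro E; inversion E; auto.
  right; intro E; inversion E; auto.
Defined.

Lemma Cmod_pos_neq (z : C) : 0 < Cmod z -> z <> 0%C.
Proof. intros H E. rewrite E, Cmod_0 in H. lra. Qed.

Lemma Cmod_sq_fst (c : C) : fst (c * Cconj c)%C = Cmod c ^ 2.
Proof. rewrite Cmod2_alt. unfold Re, Im. simpl. ring. Qed.

Lemma fst_mult_le (a b : C) : Rabs (fst (a * b)%C) <= Cmod a * Cmod b.
Proof. rewrite <- Cmod_mult. apply abs_fst_le. Qed.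

Lemma Rabs_le_inv (x y : R) : Rabs x <= y -> - y <= x <= y.
Proof. intros H. unfold Rabs in H. destruct Rcase_abs; lra. Qed.

Lemma fst_plus (a b : C) : fst (a + b)%C = fst a + fst b.
Proof. reflexivity. Qed.

Section Exc.
Variable z1 : C.
Variable R0 : R.
Variable f : C -> C.
Variable d1 : C.
Hypothesis fdiff : forall z, Cmod (z - z1) < R0 -> exists d, Cdiff f z d.
Hypothesis fd1 : Cdiff f z1 d1.

Definition phi (z : C) : C := if Ceq_dec z z1 then d1 else ((f z - f z1) / (z - z1))%C.

Lemma phi_diff w : w <> z1 -> Cmod (w - z1) < R0 -> exists d, Cdiff phi w d.
Proof.
  intros Hw HR. destruct (fdiff w HR) as [d Hd].
  assert (Hpos : 0 < Cmod (w - z1)).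
  { apply (proj1 (Cmod_gt_0 _)). intro E. apply Hw. replace w with ((w - z1) + z1)%C by ring. rewrite E. ring. }
  assert (Hg : Cdiff (fun z => (f z + - f z1) * Cinv (z + - z1))%C w
     ((d + 0) * Cinv (w + - z1) + (f w + - f z1) * ((- / ((w + - z1) * (w + - z1))) * (1 + 0)))%C).
  { apply (Cdiff_mult (fun z => f z + - f z1)%C (fun z => Cinv (z + - z1))%C).
    apply (Cdiff_plus f (fun _ => - f z1)%C); auto. apply Cdiff_const.
    apply (Cdiff_comp (fun z => z + - z1)%C Cinv w). apply (Cdiff_plus (fun z => z) (fun _ => - z1)%C). apply Cdiff_id. apply Cdiff_const.
    apply Cdiff_inv. replace (w + - z1)%C with (w - z1)%C by ring. apply Cmod_pos_neq; auto. }
  eexists. eapply Cdiff_ext with (del := Cmod (w - z1)); [auto| |exact Hg].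
  intros x Hx. unfold phi. destruct (Ceq_dec x z1) as [E|E].
  - subst. rewrite Cmod_sym in Hx. lra.
  - reflexivity.
Qed.

Lemma phi_cont_z1 : Ccont phi z1.
Proof.
  intros eps Heps. destruct (fd1 (eps / 2)) as [del [Hdel Hw]]. lra.
  exists del. split; auto. intros w Hw'.
  unfold phi. destruct (Ceq_dec z1 z1) as [_|E]; [|congruence].
  destruct (Ceq_dec w z1) as [E|E].
  - replace (d1 - d1)%C with (RtoC 0) by ring. rewrite Cmod_0. auto.
  - assert (Hn : (w - z1)%C <> 0%C).
    { intro E'. apply E. replace w with ((w - z1) + z1)%C by ring. rewrite E'. ring. }
    assert (Hp : 0 < Cmod (w - z1)) by (apply (proj1 (Cmod_gt_0 _)); auto).
    replace ((f w - f z1) / (w - z1) - d1)%C with ((f w - f z1 - d1 * (w - z1)) / (w - z1))%C by (field; auto).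
    rewrite Cmod_div by auto. specialize (Hw w Hw').
    apply Rle_lt_trans with (eps / 2). unfold Rdiv at 1.
    apply Rmult_le_reg_r with (Cmod (w - z1)); auto. rewrite Rmult_assoc, Rinv_l by lra. lra. lra.
Qed.

Lemma phi_cont z : Cmod (z - z1) < R0 -> Ccont phi z.
Proof.
  intros Hz. destruct (Ceq_dec z z1) as [E|E]. subst; apply phi_cont_z1.
  destruct (phi_diff z E Hz) as [d Hd]. eapply Cdiff_cont; eauto.
Qed.

Lemma SegCont_ball Rr u v : Rr < R0 -> Cmod (u - z1) <= Rr -> Cmod (v - z1) <= Rr -> SegCont phi u v.
Proof.
  intros HR Hu Hv s Hs. apply phi_cont. eapply Rle_lt_trans. apply lin_dist; auto. nra.
Qed.

Lemma fst_lin_mult u v t c : fst ((lin u v t - z1) * c)%C = (1 - t) * fst ((u - z1) * c)%C + t * fst ((v - z1) * c)%C.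
Proof. unfold lin. simpl. ring. Qed.

Lemma exc_tri Rr z0 w : Rr < R0 -> 0 < Cmod (z0 - z1) -> Cmod (w - z0) < Cmod (z0 - z1) ->
  Cmod (z0 - z1) <= Rr -> Cmod (w - z1) <= Rr -> tri phi z1 z0 w = 0%C.
Proof.
  intros HR Hz0 Hwz0 Hz0R HwR.
  set (c := Cconj (z0 - z1)).
  set (kap := Cmod (z0 - z1) ^ 2 - Cmod (w - z0) * Cmod (z0 - z1)).
  assert (Hkap : 0 < kap) by (unfold kap; nra).
  assert (HRr : 0 <= Rr) by (generalize (Cmod_ge_0 (z0 - z1)); lra).
  assert (Fz0 : fst ((z0 - z1) * c)%C = Cmod (z0 - z1) ^ 2) by apply Cmod_sq_fst.
  assert (Fw : kap <= fst ((w - z1) * c)%C).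
  { replace ((w - z1) * c)%C with ((z0 - z1) * c + (w - z0) * c)%C by ring.
    rewrite fst_plus.
    rewrite Fz0. generalize (fst_mult_le (w - z0) c). unfold c. rewrite Cmod_conj. unfold kap.
    intro H. apply Rabs_le_inv in H. lra. }
  destruct (phi_cont_z1 1 Rlt_0_1) as [del [Hdel Hphi]].
  assert (Hbnd : forall x, Cmod (x - z1) < del -> Cmod (phi x) <= Cmod (phi z1) + 1).
  { intros x Hx. specialize (Hphi x Hx).
    replace (phi x) with ((phi x - phi z1) + phi z1)%C by ring.
    eapply Rle_trans. apply Cmod_triangle. lra. }
  set (M := Cmod (phi z1) + 1).
  assert (HM : 0 < M) by (unfold M; generalize (Cmod_ge_0 (phi z1)); lra).
  assert (Hall : forall s, 0 < s <= 1 -> s * Rr < del -> Cmod (tri phi z1 z0 w) <= 8 * M * Rr * s).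
  { intros s Hs Hsd.
    set (u' := lin z1 z0 s). set (v' := lin z1 w s).
    assert (Ev : lin w z1 (1 - s) = v') by (unfold v', lin; rewrite RtoC_minus; ring).
    assert (Du : (u' - z1)%C = (RtoC s * (z0 - z1))%C) by (unfold u', lin; ring).
    assert (Dv : (v' - z1)%C = (RtoC s * (w - z1))%C) by (unfold v', lin; ring).
    assert (Nu : Cmod (u' - z1) = s * Cmod (z0 - z1)) by (rewrite Du, Cmod_Rmult, Rabs_pos_eq; lra).
    assert (Nv : Cmod (v' - z1) = s * Cmod (w - z1)) by (rewrite Dv, Cmod_Rmult, Rabs_pos_eq; lra).
    assert (Nuv : Cmod (v' - u') = s * Cmod (w - z0)).
    { replace (v' - u')%C with (RtoC s * (w - z0))%C by (unfold u', v', lin; ring).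
      rewrite Cmod_Rmult, Rabs_pos_eq; lra. }
    assert (Hwz0R : Cmod (w - z0) <= 2 * Rr).
    { eapply Rle_trans. apply Cmod_dist_tri with (b := z1). rewrite (Cmod_sym z1 z0). lra. }
    assert (Su : Cmod (u' - z1) <= Rr) by (rewrite Nu; nra).
    assert (Sv : Cmod (v' - z1) <= Rr) by (rewrite Nv; nra).
    assert (Sz1 : Cmod (z1 - z1) <= Rr) by (replace (z1 - z1)%C with (RtoC 0) by ring; rewrite Cmod_0; lra).
    assert (Edec : tri phi z1 z0 w = (tri phi z1 u' v' + tri phi u' z0 w + tri phi u' w v')%C).
    { unfold tri.
      rewrite (seg_split phi z1 z0 s) by (try lra; apply SegCont_ball with Rr; auto).
      rewrite (seg_split phi w z1 (1 - s)) by (try lra; apply SegCont_ball with Rr; auto).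
      rewrite Ev. fold u'.
      rewrite (seg_rev phi u' v') by (apply SegCont_ball with Rr; auto).
      rewrite (seg_rev phi u' w) by (apply SegCont_ball with Rr; auto).
      ring. }
    set (K := fun x => Cmod (x - z1) <= Rr /\ s * kap <= fst ((x - z1) * c)%C).
    assert (Kconv : forall a b t, K a -> K b -> 0 <= t <= 1 -> K (lin a b t)).
    { intros a b t [Ha1 Ha2] [Hb1 Hb2] Ht. split.
      eapply Rle_trans. apply lin_dist; auto. nra.
      rewrite fst_lin_mult. nra. }
    assert (Kclosed : forall p, (forall eps, 0 < eps -> exists x, K x /\ Cmod (x - p) < eps) -> K p).
    { intros p Hp. split.
      - apply Rnot_lt_le. intro Hlt. destruct (Hp (Cmod (p - z1) - Rr)) as [x [[Hx1 _] Hx2]]. lra.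
        generalize (Cmod_dist_tri p x z1). rewrite (Cmod_sym p x). lra.
      - apply Rnot_lt_le. intro Hlt.
        assert (Hc : 0 < Cmod c + 1) by (generalize (Cmod_ge_0 c); lra).
        destruct (Hp ((s * kap - fst ((p - z1) * c)%C) / (Cmod c + 1))) as [x [[_ Hx1] Hx2]].
        apply Rdiv_lt_0_compat; lra.
        replace ((x - z1) * c)%C with ((p - z1) * c + (x - p) * c)%C in Hx1 by ring.
        rewrite fst_plus in Hx1.
        generalize (fst_mult_le (x - p) c). intro H. apply Rabs_le_inv in H.
        apply Rmult_lt_compat_r with (r := Cmod c + 1) in Hx2; auto.
        unfold Rdiv in Hx2. rewrite Rmult_assoc, Rinv_l, Rmult_1_r in Hx2 by lra.
        generalize (Cmod_ge_0 (x - p)) (Cmod_ge_0 c). nra. }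
    assert (Kdiff : forall x, K x -> exists d, Cdiff phi x d).
    { intros x [Hx1 Hx2]. apply phi_diff. intro E. subst x.
      replace ((z1 - z1) * c)%C with (RtoC 0) in Hx2 by ring. simpl in Hx2. nra. lra. }
    assert (Ku : K u'). { split; auto. rewrite Du. replace ((RtoC s * (z0 - z1)) * c)%C with (RtoC s * ((z0 - z1) * c))%C by ring.
      change (fst (RtoC s * ((z0 - z1) * c))%C) with (s * fst ((z0 - z1) * c)%C - 0 * snd ((z0 - z1) * c)%C).
      rewrite Fz0. unfold kap. assert (0 <= s * (Cmod (w - z0) * Cmod (z0 - z1))) by (apply Rmult_le_pos; [lra| apply Rmult_le_pos; apply Cmod_ge_0]). lra. }
    assert (Kv : K v'). { split; auto. rewrite Dv. replace ((RtoC s * (w - z1)) * c)%C with (RtoC s * ((w - z1) * c))%C by ring.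
      change (fst (RtoC s * ((w - z1) * c))%C) with (s * fst ((w - z1) * c)%C - 0 * snd ((w - z1) * c)%C).
      nra. }
    assert (Kz0 : K z0). { split; auto. rewrite Fz0.
      assert (kap <= Cmod (z0 - z1) ^ 2).
      { unfold kap. assert (0 <= Cmod (w - z0) * Cmod (z0 - z1)) by (apply Rmult_le_pos; apply Cmod_ge_0). lra. }
      assert (0 <= (1 - s) * kap) by (apply Rmult_le_pos; lra). lra. }
    assert (Kw : K w). { split; auto. assert (0 <= (1 - s) * kap) by (apply Rmult_le_pos; lra). lra. }
    rewrite Edec. rewrite (goursat K Kconv Kclosed phi Kdiff u' z0 w) by auto.
    rewrite (goursat K Kconv Kclosed phi Kdiff u' w v') by auto.
    replace (tri phi z1 u' v' + 0 + 0)%C with (tri phi z1 u' v') by ring.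
    assert (Pts : forall a b t, 0 <= t <= 1 -> Cmod (a - z1) <= s * Rr -> Cmod (b - z1) <= s * Rr ->
       Cmod (phi (lin a b t)) <= M).
    { intros a b t Ht Ha Hb. apply Hbnd. eapply Rle_lt_trans. apply lin_dist; auto. nra. }
    assert (Hu' : Cmod (u' - z1) <= s * Rr) by (rewrite Nu; nra).
    assert (Hv' : Cmod (v' - z1) <= s * Rr) by (rewrite Nv; nra).
    assert (Hz1 : Cmod (z1 - z1) <= s * Rr) by (replace (z1 - z1)%C with (RtoC 0) by ring; rewrite Cmod_0; nra).
    unfold tri. eapply Rle_trans. apply Cmod_triangle3.
    assert (B1 := seg_bound phi z1 u' M ltac:(apply SegCont_ball with Rr; auto) (fun t Ht => Pts _ _ t Ht Hz1 Hu')).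
    assert (B2 := seg_bound phi u' v' M ltac:(apply SegCont_ball with Rr; auto) (fun t Ht => Pts _ _ t Ht Hu' Hv')).
    assert (B3 := seg_bound phi v' z1 M ltac:(apply SegCont_ball with Rr; auto) (fun t Ht => Pts _ _ t Ht Hv' Hz1)).
    rewrite Nuv in B2. rewrite Nu in B1. rewrite Cmod_sym, Nv in B3.
    assert (Hsum : Cmod (z0 - z1) + Cmod (w - z0) + Cmod (w - z1) <= 4 * Rr) by lra.
    assert (Hm : 2 * M * s * (Cmod (z0 - z1) + Cmod (w - z0) + Cmod (w - z1)) <= 2 * M * s * (4 * Rr)).
    { apply Rmult_le_compat_l; auto. apply Rmult_le_pos; lra. }
    lra. }
  apply Cmod_eq_0. apply Rle_antisym; [|apply Cmod_ge_0].
  apply Rnot_lt_le. intro Hpos. set (T := Cmod (tri phi z1 z0 w)) in *.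
  set (s := Rmin 1 (Rmin (del / (2 * (Rr + 1))) (T / (16 * M * (Rr + 1))))).
  assert (Hs1 : s <= 1) by apply Rmin_l.
  assert (Hs2 : s <= del / (2 * (Rr + 1))) by (eapply Rle_trans; [apply Rmin_r|apply Rmin_l]).
  assert (Hs3 : s <= T / (16 * M * (Rr + 1))) by (eapply Rle_trans; [apply Rmin_r|apply Rmin_r]).
  assert (Hs0 : 0 < s).
  { apply Rmin_pos. lra. apply Rmin_pos; apply Rdiv_lt_0_compat; try nra. }
  specialize (Hall s (conj Hs0 Hs1)).
  assert (Hsd : s * Rr < del).
  { apply Rle_lt_trans with (del / (2 * (Rr + 1)) * Rr). apply Rmult_le_compat_r; auto.
    apply Rmult_lt_reg_r with (2 * (Rr + 1)). nra.
    replace (del / (2 * (Rr + 1)) * Rr * (2 * (Rr + 1))) with (del * Rr) by (field; lra). nra. }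
  specialize (Hall Hsd).
  assert (8 * M * Rr * s <= T / 2).
  { apply Rle_trans with (8 * M * Rr * (T / (16 * M * (Rr + 1)))). apply Rmult_le_compat_l; nra.
    apply Rmult_le_reg_r with (16 * M * (Rr + 1)). nra.
    replace (8 * M * Rr * (T / (16 * M * (Rr + 1))) * (16 * M * (Rr + 1))) with (8 * M * Rr * T) by (field; lra).
    replace (T / 2 * (16 * M * (Rr + 1))) with (8 * M * T * (Rr + 1)) by field. nra. }
  lra.
Qed.

End Exc.


Lemma Rdiff_of_comp (g : R -> C) t a b :
  derivable_pt_lim (fun s => fst (g s)) t a -> derivable_pt_lim (fun s => snd (g s)) t b ->
  Rdiff g t (a, b).
Proof.
  intros H1 H2 eps Heps.
  destruct (H1 (eps / 2)) as [d1 Hd1]. lra.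
  destruct (H2 (eps / 2)) as [d2 Hd2]. lra.
  exists (Rmin d1 d2). split. apply Rmin_pos; apply cond_pos.
  intros h Hh. destruct (Req_dec h 0) as [E|E].
  - subst h. replace (g (t + 0)%R - g t - RtoC 0 * (a, b))%C with (RtoC 0).
    rewrite Cmod_0, Rabs_R0. lra. rewrite Rplus_0_r. ring.
  - assert (Hh1 : Rabs h < d1) by (eapply Rlt_le_trans; [apply Hh|apply Rmin_l]).
    assert (Hh2 : Rabs h < d2) by (eapply Rlt_le_trans; [apply Hh|apply Rmin_r]).
    specialize (Hd1 h E Hh1). specialize (Hd2 h E Hh2).
    assert (Hp : 0 < Rabs h) by (apply Rabs_pos_lt; auto).
    assert (X1 : Rabs (fst (g (t + h)) - fst (g t) - h * a) <= eps / 2 * Rabs h).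
    { replace (fst (g (t + h)) - fst (g t) - h * a) with (((fst (g (t + h)) - fst (g t)) / h - a) * h) by (field; auto).
      rewrite Rabs_mult. apply Rmult_le_compat_r; lra. }
    assert (X2 : Rabs (snd (g (t + h)) - snd (g t) - h * b) <= eps / 2 * Rabs h).
    { replace (snd (g (t + h)) - snd (g t) - h * b) with (((snd (g (t + h)) - snd (g t)) / h - b) * h) by (field; auto).
      rewrite Rabs_mult. apply Rmult_le_compat_r; lra. }
    eapply Rle_trans. apply Cmod_le_abs. simpl.
    replace (fst (g (t + h)) + - fst (g t) + - (h * a - 0 * b)) with (fst (g (t + h)) - fst (g t) - h * a) by ring.
    replace (snd (g (t + h)) + - snd (g t) + - (h * b + 0 * a)) with (snd (g (t + h)) - snd (g t) - h * b) by ring.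
    lra.
Qed.

Definition circ (z1 rho : C) (t : R) : C := (z1 + rho * (cos t, sin t))%C.

Lemma Rdiff_circ z1 rho t : Rdiff (circ z1 rho) t (rho * ((- sin t)%R, cos t))%C.
Proof.
  replace (rho * ((- sin t)%R, cos t))%C with
    (fst rho * (- sin t) - snd rho * cos t, fst rho * cos t + snd rho * (- sin t)) by (apply C_eq; simpl; ring).
  apply Rdiff_of_comp.
  - apply is_derive_Reals. unfold circ. simpl.
    auto_derive. auto. ring.
  - apply is_derive_Reals. unfold circ. simpl.
    auto_derive. auto. ring.
Qed.

Lemma circ_mod z1 rho t : Cmod (circ z1 rho t - z1) = Cmod rho.
Proof.
  unfold circ. replace (z1 + rho * (cos t, sin t) - z1)%C with (rho * (cos t, sin t))%C by ring.
  rewrite Cmod_mult. replace (Cmod (cos t, sin t)) with 1. ring.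
  assert (E : cos t ^ 2 + sin t ^ 2 = 1) by (generalize (sin2_cos2 t); unfold Rsqr; nra).
  unfold Cmod. cbn [fst snd]. rewrite E. symmetry. apply sqrt_1.
Qed.

Section Prim.
Variable z1 : C.
Variable R0 : R.
Variable f : C -> C.
Variable d1 : C.
Hypothesis fdiff : forall z, Cmod (z - z1) < R0 -> exists d, Cdiff f z d.
Hypothesis fd1 : Cdiff f z1 d1.

Let ph := phi z1 f d1.
Definition Gp (z : C) : C := seg (phi z1 f d1) z1 z.

Lemma Gp_diff Rr z0 : Rr < R0 -> 0 < Cmod (z0 - z1) < Rr -> Cdiff Gp z0 (ph z0).
Proof.
  intros HR [H0 H1] eps Heps.
  destruct (phi_cont z1 R0 f d1 fdiff fd1 z0 ltac:(lra) (eps / 2)) as [d0 [Hd0 Hc]]. lra.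
  exists (Rmin d0 (Rmin (Cmod (z0 - z1)) (Rr - Cmod (z0 - z1)))). split.
  repeat apply Rmin_pos; lra.
  intros w Hw.
  assert (Hw0 : Cmod (w - z0) < d0) by (eapply Rlt_le_trans; [apply Hw|apply Rmin_l]).
  assert (Hw1 : Cmod (w - z0) < Cmod (z0 - z1)) by (eapply Rlt_le_trans; [apply Hw|eapply Rle_trans; [apply Rmin_r|apply Rmin_l]]).
  assert (Hw2 : Cmod (w - z0) < Rr - Cmod (z0 - z1)) by (eapply Rlt_le_trans; [apply Hw|eapply Rle_trans; [apply Rmin_r|apply Rmin_r]]).
  assert (Hwz1 : Cmod (w - z1) <= Rr) by (generalize (Cmod_dist_tri w z0 z1); lra).
  assert (Et := exc_tri z1 R0 f d1 fdiff fd1 Rr z0 w HR H0 Hw1 ltac:(lra) Hwz1).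
  assert (Sc : SegCont (phi z1 f d1) z1 w).
  { apply (SegCont_ball z1 R0 f d1 fdiff fd1 Rr); auto.
    replace (z1 - z1)%C with (RtoC 0) by ring. rewrite Cmod_0. lra. }
  assert (Sc2 : SegCont (phi z1 f d1) z0 w).
  { apply (SegCont_ball z1 R0 f d1 fdiff fd1 Rr); auto. lra. }
  unfold tri in Et. rewrite (seg_rev _ z1 w Sc) in Et.
  assert (E : (Gp w - Gp z0)%C = seg (phi z1 f d1) z0 w).
  { unfold Gp. replace (seg (phi z1 f d1) z1 w) with (seg (phi z1 f d1) z1 z0 + seg (phi z1 f d1) z0 w - 
       (seg (phi z1 f d1) z1 z0 + seg (phi z1 f d1) z0 w + - seg (phi z1 f d1) z1 w))%C by ring.
    rewrite Et. ring. }
  rewrite E. unfold ph.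
  replace (phi z1 f d1 z0 * (w - z0))%C with ((w - z0) * phi z1 f d1 z0)%C by ring.
  rewrite <- (seg_const (phi z1 f d1 z0) z0 w).
  rewrite <- seg_minus; auto.
  2:{ intros s _. intros e He. exists 1. split. lra. intros. replace (phi z1 f d1 z0 - phi z1 f d1 z0)%C with (RtoC 0) by ring.
      rewrite Cmod_0. auto. }
  replace (eps * Cmod (w - z0)) with (2 * (eps / 2) * Cmod (w - z0)) by field.
  apply seg_bound.
  - intros s Hs. apply Ccont_minus_const. apply Sc2; auto.
  - intros s Hs. left. apply Hc. eapply Rle_lt_trans. apply lin_dist; auto.
    replace (z0 - z0)%C with (RtoC 0) by ring. rewrite Cmod_0. generalize (Cmod_ge_0 (w - z0)). nra.
Qed.

Lemma mvp Rr rho u : Rr < R0 -> 0 < Cmod rho < Rr ->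
  RInt (fun t => fst (u * f (circ z1 rho t))%C) 0 (2 * PI) = 2 * PI * fst (u * f z1)%C.
Proof.
  intros HR [Hr0 Hr1].
  set (c := (- Ci * u)%C).
  set (H := fun t => fst (c * Gp (circ z1 rho t))%C).
  set (df := fun t => fst (u * f (circ z1 rho t) - u * f z1)%C).
  assert (Hm : forall t, Cmod (circ z1 rho t - z1) = Cmod rho) by apply circ_mod.
  assert (Hne : forall t, circ z1 rho t <> z1).
  { intros t E. generalize (Hm t). rewrite E. replace (z1 - z1)%C with (RtoC 0) by ring. rewrite Cmod_0. lra. }
  assert (Hder : forall t, is_derive H t (df t)).
  { intros t. apply is_derive_Reals.
    assert (R1 : Rdiff (fun s => c * Gp (circ z1 rho s))%C t (c * ph (circ z1 rho t) * (rho * ((- sin t)%R, cos t)))%C).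
    { apply (Rdiff_comp (fun z => c * Gp z)%C (circ z1 rho)).
      apply Cdiff_scal. apply (Gp_diff Rr); auto. rewrite Hm. lra.
      apply Rdiff_circ. }
    assert (E : (c * ph (circ z1 rho t) * (rho * ((- sin t)%R, cos t)))%C = (u * f (circ z1 rho t) - u * f z1)%C).
    { unfold ph, phi. destruct (Ceq_dec (circ z1 rho t) z1) as [E|_]. exfalso; apply (Hne t E).
      assert (Ed : (circ z1 rho t - z1)%C = (rho * (cos t, sin t))%C) by (unfold circ; ring).
      assert (Ed2 : (rho * ((- sin t)%R, cos t))%C = (Ci * (circ z1 rho t - z1))%C).
      { rewrite Ed. apply C_eq; simpl; ring. }
      assert (Hnz : (circ z1 rho t - z1)%C <> 0%C).
      { apply Cmod_pos_neq. rewrite Hm. auto. }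
      rewrite Ed2. unfold c.
      replace (- Ci * u * ((f (circ z1 rho t) - f z1) / (circ z1 rho t - z1)) * (Ci * (circ z1 rho t - z1)))%C
        with (- (Ci * Ci) * u * (f (circ z1 rho t) - f z1))%C by (field; auto).
      replace (Ci * Ci)%C with (RtoC (-1)) by (apply C_eq; simpl; ring). apply C_eq; simpl; ring. }
    rewrite E in R1. apply (Rdiff_fst _ _ _ R1). }
  assert (Hcont : forall t, continuous df t).
  { intros t. unfold df. apply (Pcont_fst (fun s => (u * f (circ z1 rho s) - u * f z1)%C)).
    apply (Pcont_comp (fun z => u * f z - u * f z1)%C (circ z1 rho) t _ (Rdiff_circ z1 rho t)).
    apply Ccont_minus_const. apply Ccont_scal.
    destruct (fdiff (circ z1 rho t)) as [d Hd]. rewrite Hm. lra. eapply Cdiff_cont; eauto. }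
  assert (HI := is_RInt_derive (V := R_CompleteNormedModule) H df 0 (2 * PI) (fun t _ => Hder t) (fun t _ => Hcont t)).
  assert (Hend : H (2 * PI) = H 0).
  { unfold H, circ. rewrite cos_2PI, sin_2PI, cos_0, sin_0. reflexivity. }
  rewrite Hend in HI. rewrite RMinus in HI. replace (H 0 - H 0) with 0 in HI by ring.
  apply is_RInt_unique in HI.
  rewrite (RInt_ext _ (fun t => plus (df t) (fst (u * f z1)%C))).
  2:{ intros x _. unfold df. rewrite RPlus. simpl. ring. }
  rewrite (RInt_plus (V := R_CompleteNormedModule)).
  rewrite HI, RInt_const. cbn -[PI fst Cmult]. ring.
  apply (ex_RInt_continuous (V := R_CompleteNormedModule)). intros; apply Hcont.
  apply ex_RInt_const.
Qed.

End Prim.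


Lemma fst_le_Cmod (c : C) : fst c <= Cmod c.
Proof. generalize (abs_fst_le c). unfold Rabs; destruct Rcase_abs; lra. Qed.

Lemma cont_one_minus_fst (F : R -> C) t : Pcont F t -> continuous (fun s => 1 - fst (F s)) t.
Proof.
  intros H. apply cont_eps. intros eps Heps. destruct (H eps Heps) as [d [Hd Hs]].
  exists d; split; auto. intros s Hs'. specialize (Hs s Hs').
  eapply Rle_lt_trans; [|apply Hs]. replace (1 - fst (F s) - (1 - fst (F t))) with (- fst (F s - F t)%C) by (simpl; ring).
  rewrite Rabs_Ropp. apply abs_fst_le.
Qed.

Section MaxMod.
Variable f : C -> C.
Hypothesis fdiff : forall z, Cmod z < 1 -> exists d, Cdiff f z d.
Hypothesis fbound : forall z, Cmod z < 1 -> Cmod (f z) <= 1.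

Lemma ball_in_disc z1 z : Cmod (z - z1) < 1 - Cmod z1 -> Cmod z < 1.
Proof. intros H. generalize (Cmod_dist_tri z z1 0). replace (z - 0)%C with z by ring. replace (z1 - 0)%C with z1 by ring. lra. Qed.

Lemma mm_open z1 : Cmod z1 < 1 -> Cmod (f z1) = 1 ->
  exists r, 0 < r /\ forall rho, Cmod rho < r -> Cmod (f (z1 + rho)) = 1.
Proof.
  intros Hz1 Hf1. set (R0 := 1 - Cmod z1). assert (HR0 : 0 < R0) by (unfold R0; lra).
  destruct (fdiff z1 Hz1) as [d1 Hd1].
  assert (Fd : forall z, Cmod (z - z1) < R0 -> exists d, Cdiff f z d).
  { intros z Hz. apply fdiff. apply ball_in_disc with z1. auto. }
  exists (R0 / 2). split. lra. intros rho Hrho.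
  destruct (Req_dec (Cmod rho) 0) as [E0|E0].
  { apply Cmod_eq_0 in E0. rewrite E0. replace (z1 + 0)%C with z1 by ring. auto. }
  assert (Hr : 0 < Cmod rho) by (generalize (Cmod_ge_0 rho); lra).
  set (u := Cconj (f z1)).
  assert (Hu : Cmod u = 1) by (unfold u; rewrite Cmod_conj; auto).
  assert (HM := mvp z1 R0 f d1 Fd Hd1 (3 * R0 / 4) rho u ltac:(lra) ltac:(split; lra)).
  assert (Hfu : fst (u * f z1)%C = 1).
  { unfold u. rewrite Cmult_comm. rewrite Cmod_sq_fst. rewrite Hf1. ring. }
  rewrite Hfu in HM.
  set (F := fun t => (u * f (circ z1 rho t))%C).
  assert (Hin : forall t, Cmod (circ z1 rho t) < 1).
  { intros t. apply ball_in_disc with z1. rewrite circ_mod. fold R0. lra. }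
  assert (Pc : forall t, Pcont F t).
  { intros t. unfold F. apply (Pcont_comp (fun z => u * f z)%C (circ z1 rho) t _ (Rdiff_circ z1 rho t)).
    apply Ccont_scal. destruct (fdiff _ (Hin t)) as [d Hd]. eapply Cdiff_cont; eauto. }
  set (g := fun t => 1 - fst (F t)).
  assert (Hg0 : forall t, 0 <= g t).
  { intros t. unfold g, F. generalize (fst_le_Cmod (u * f (circ z1 rho t))%C). rewrite Cmod_mult, Hu.
    generalize (fbound _ (Hin t)). lra. }
  assert (Hgc : forall t, continuous g t) by (intros t; apply cont_one_minus_fst; auto).
  assert (Hex : forall a b, ex_RInt g a b) by (intros a b; apply (ex_RInt_continuous (V := R_CompleteNormedModule)); intros; apply Hgc).
  assert (HI : RInt g 0 (2 * PI) = 0).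
  { unfold g. rewrite (RInt_minus (V := R_CompleteNormedModule) (fun _ => 1) (fun t => fst (F t))).
    rewrite RInt_const. unfold F. rewrite HM. cbn -[PI fst Cmult]. ring.
    apply ex_RInt_const.
    apply (ex_RInt_continuous (V := R_CompleteNormedModule)). intros; apply Pcont_fst; auto. }
  assert (Hg00 : g 0 = 0).
  { apply Rle_antisym; [|apply Hg0]. apply Rnot_lt_le. intro Hpos.
    destruct (Pc 0 (g 0 / 2)) as [del [Hdel Hs]]. lra.
    set (eta := Rmin (del / 2) PI).
    assert (Heta : 0 < eta) by (apply Rmin_pos; [lra| apply PI_RGT_0]).
    assert (Heta2 : eta < 2 * PI) by (generalize (Rmin_r (del / 2) PI) PI_RGT_0; fold eta; lra).
    assert (Hpos1 : 0 < RInt g 0 eta).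
    { apply RInt_gt_0; auto. intros x Hx.
      assert (Hx' : Rabs (x - 0) < del).
      { rewrite Rminus_0_r, Rabs_pos_eq by lra. generalize (Rmin_l (del / 2) PI). fold eta. lra. }
      specialize (Hs x Hx').
      unfold g. replace (1 - fst (F x)) with (1 - fst (F 0) - fst (F x - F 0)%C) by (simpl; ring).
      generalize (abs_fst_le (F x - F 0)%C). fold (g 0). intro A. unfold Rabs in A. destruct Rcase_abs in A; lra. }
    assert (Hpos2 : 0 <= RInt g eta (2 * PI)).
    { apply RInt_ge_0; [lra | auto | intros; apply Hg0]. }
    rewrite <- (RInt_Chasles (V := R_CompleteNormedModule) g 0 eta (2 * PI)) in HI by auto.
    rewrite RPlus in HI. lra. }
  unfold g, F, circ in Hg00. rewrite cos_0, sin_0 in Hg00.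
  replace (z1 + rho * (1, 0))%C with (z1 + rho)%C in Hg00 by (apply C_eq; simpl; ring).
  apply Rle_antisym. apply fbound. apply ball_in_disc with z1.
  replace (z1 + rho - z1)%C with rho by ring. fold R0. lra.
  generalize (fst_le_Cmod (u * f (z1 + rho))%C). rewrite Cmod_mult, Hu. lra.
Qed.

Theorem maxmod l0 : Cmod l0 < 1 -> Cmod (f l0) < 1 -> forall z, Cmod z < 1 -> Cmod (f z) < 1.
Proof.
  intros Hl0 Hfl0 z Hz. apply Rnot_le_lt. intro Hge.
  assert (Hfz : Cmod (f z) = 1) by (generalize (fbound z Hz); lra).
  set (p := lin z l0).
  assert (Hp : forall t, 0 <= t <= 1 -> Cmod (p t) < 1).
  { intros t Ht. unfold p. generalize (lin_dist z l0 0 t Ht). replace (lin z l0 t - 0)%C with (lin z l0 t) by ring.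
    replace (z - 0)%C with z by ring. replace (l0 - 0)%C with l0 by ring. intro H.
    assert ((1 - t) * Cmod z <= (1 - t) * 1) by (apply Rmult_le_compat_l; lra).
    destruct (Req_dec t 0). subst t. lra.
    assert (t * Cmod l0 < t * 1) by (apply Rmult_lt_compat_l; lra). lra. }
  set (E := fun t => 0 <= t <= 1 /\ forall s, 0 <= s <= t -> Cmod (f (p s)) = 1).
  assert (HE0 : E 0).
  { split. lra. intros s Hs. replace s with 0 by lra. unfold p. rewrite lin_0. auto. }
  assert (Hb : bound E) by (exists 1; intros x [Hx _]; lra).
  destruct (completeness E Hb (ex_intro _ 0 HE0)) as [T [HT1 HT2]].
  assert (T0 : 0 <= T) by (apply HT1; auto).
  assert (T1 : T <= 1) by (apply HT2; intros x [Hx _]; lra).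
  assert (A : forall s, 0 <= s < T -> Cmod (f (p s)) = 1).
  { intros s Hs. destruct (classic (exists x, E x /\ s < x)) as [[x [[_ Hx] Hsx]]|Hn].
    - apply Hx. lra.
    - exfalso. assert (Hub : is_upper_bound E s).
      { intros x Hx. apply Rnot_lt_le. intro Hlt. apply Hn. exists x; auto. }
      generalize (HT2 s Hub). lra. }
  assert (Hcont : forall t, 0 <= t <= 1 -> Pcont (fun s => f (p s)) t).
  { intros t Ht. apply (Pcont_comp f p t (l0 - z)%C (Rdiff_lin z l0 t)).
    destruct (fdiff (p t) (Hp t Ht)) as [d Hd]. eapply Cdiff_cont; eauto. }
  assert (B : Cmod (f (p T)) = 1).
  { destruct (Req_dec T 0) as [E0|E0].
    - rewrite E0. unfold p. rewrite lin_0. auto.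
    - apply Rle_antisym. apply fbound, Hp; lra. apply Rnot_lt_le. intro Hlt.
      destruct (Hcont T ltac:(lra) (1 - Cmod (f (p T)))) as [del [Hdel Hs]]. lra.
      set (s := Rmax 0 (T - del / 2)).
      assert (Hs1 : 0 <= s < T) by (unfold s; split; [apply Rmax_l| apply Rmax_lub_lt; lra]).
      assert (Hs2 : Rabs (s - T) < del).
      { rewrite Rabs_left by lra. unfold s. generalize (Rmax_r 0 (T - del / 2)). lra. }
      specialize (Hs s Hs2). simpl in Hs.
      generalize (Cmod_rev_tri (f (p s)) (f (p T))). rewrite (A s Hs1). lra. }
  assert (C1 : T < 1).
  { destruct (Req_dec T 1) as [E1|E1]; [|lra]. rewrite E1 in B. unfold p in B. rewrite lin_1 in B. lra. }
  destruct (mm_open (p T) (Hp T ltac:(lra)) B) as [r [Hr Hopen]].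
  assert (Hq : 0 < 2 * (Cmod (l0 - z) + 1)) by (generalize (Cmod_ge_0 (l0 - z)); lra).
  set (eta := Rmin ((1 - T) / 2) (r / (2 * (Cmod (l0 - z) + 1)))).
  assert (Heta : 0 < eta) by (apply Rmin_pos; apply Rdiv_lt_0_compat; lra).
  assert (Heta1 : eta <= (1 - T) / 2) by apply Rmin_l.
  assert (Heta2 : eta <= r / (2 * (Cmod (l0 - z) + 1))) by apply Rmin_r.
  assert (HE : E (T + eta)).
  { split. lra. intros s Hs. destruct (Rlt_dec s T) as [Hlt|Hge'].
    - apply A. lra.
    - replace (p s) with (p T + RtoC (s - T) * (l0 - z))%C by (unfold p, lin; rewrite RtoC_minus; ring).
      apply Hopen. rewrite Cmod_Rmult, Rabs_pos_eq by lra.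
      apply Rle_lt_trans with (eta * Cmod (l0 - z)). apply Rmult_le_compat_r. apply Cmod_ge_0. lra.
      apply Rle_lt_trans with (r / (2 * (Cmod (l0 - z) + 1)) * Cmod (l0 - z)).
      apply Rmult_le_compat_r. apply Cmod_ge_0. auto.
      apply Rmult_lt_reg_r with (2 * (Cmod (l0 - z) + 1)). auto.
      replace (r / (2 * (Cmod (l0 - z) + 1)) * Cmod (l0 - z) * (2 * (Cmod (l0 - z) + 1))) with (r * Cmod (l0 - z)) by (field; lra).
      generalize (Cmod_ge_0 (l0 - z)). nra. }
  generalize (HT1 _ HE). lra.
Qed.
End MaxMod.


Definition N2 (x : C) : R := fst x ^ 2 + snd x ^ 2.

Lemma Cmod_N2 x : Cmod x ^ 2 = N2 x.
Proof. rewrite Cmod2_alt. reflexivity. Qed.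

Lemma Cmod_lt_N2 x y : Cmod x < Cmod y <-> N2 x < N2 y.
Proof.
  rewrite <- !Cmod_N2. generalize (Cmod_ge_0 x) (Cmod_ge_0 y). intros. split; intro; nra.
Qed.

Lemma Cmod_le_N2 x y : Cmod x <= Cmod y <-> N2 x <= N2 y.
Proof.
  rewrite <- !Cmod_N2. generalize (Cmod_ge_0 x) (Cmod_ge_0 y). intros. split; intro; nra.
Qed.

Lemma key_identity (c : R) (y1 y2 q zz om : C) :
  N2 (RtoC (2 * c) - zz * (y1 + om * y2))%C - N2 (RtoC (2 * c) * zz * om * q - (y1 + om * y2))%C =
  4 * c ^ 2 * (1 - N2 q) - 4 * c * fst (zz * ((y1 - Cconj y2 * q) + om * (y2 - Cconj y1 * q)))%C
  + (N2 zz - 1) * (N2 (y1 + om * y2)%C - 4 * c ^ 2 * N2 q * N2 om)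
  + (N2 om - 1) * (- 4 * c ^ 2 * N2 q + 4 * c * fst (zz * q * Cconj y2)%C).
Proof.
  destruct y1 as [a1 a2], y2 as [b1 b2], q as [q1 q2], zz as [z1 z2], om as [w1 w2].
  unfold N2. simpl. ring.
Qed.

Lemma unit_exists (x : C) : exists u, Cmod u = 1 /\ x = (u * RtoC (Cmod x))%C.
Proof.
  destruct (Ceq_dec x 0) as [E|E].
  - exists (RtoC 1). split. apply Cmod_1. rewrite E, Cmod_0. ring.
  - assert (Hp : 0 < Cmod x) by (apply (proj1 (Cmod_gt_0 x)); auto).
    exists (x * RtoC (/ Cmod x))%C. split.
    + rewrite Cmod_mult, Cmod_R, Rabs_pos_eq. field. lra. left; apply Rinv_0_lt_compat; auto.
    + apply C_eq; simpl; field; lra.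
Qed.

Lemma unit_conj (u : C) : Cmod u = 1 -> (Cconj u * u)%C = RtoC 1.
Proof.
  intros H. assert (E : N2 u = 1) by (rewrite <- Cmod_N2, H; ring). unfold N2 in E.
  apply C_eq; simpl; nra.
Qed.

Lemma choose_rot (A B : C) : exists om zz, Cmod om = 1 /\ Cmod zz = 1 /\
  fst (zz * (A + om * B))%C = Cmod A + Cmod B.
Proof.
  destruct (unit_exists A) as [ua [Ha EA]]. destruct (unit_exists B) as [ub [Hb EB]].
  exists (ua * Cconj ub)%C, (Cconj ua). split. rewrite Cmod_mult, Cmod_conj, Ha, Hb. ring.
  split. rewrite Cmod_conj; auto.
  assert (E : (Cconj ua * (A + ua * Cconj ub * B))%C = RtoC (Cmod A + Cmod B)).
  { set (mA := Cmod A) in *. set (mB := Cmod B) in *. rewrite EA at 1. rewrite EB.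
    replace (Cconj ua * (ua * RtoC mA + ua * Cconj ub * (ub * RtoC mB)))%C with
      ((Cconj ua * ua) * (RtoC mA + (Cconj ub * ub) * RtoC mB))%C by ring.
    rewrite !unit_conj by auto. apply C_eq; simpl; ring. }
  rewrite E. reflexivity.
Qed.

Section Point.
Variables (c : R) (y1 y2 q zz om : C).
Hypothesis Hc : 0 < c.
Hypothesis Hzz : Cmod zz = 1.
Hypothesis Hom : Cmod om = 1.
Hypothesis Hq : Cmod q < 1.
Let A := (y1 - Cconj y2 * q)%C.
Let B := (y2 - Cconj y1 * q)%C.
Hypothesis Hcl : Cmod A + Cmod B <= c * (1 - Cmod q ^ 2).

Let w := (y1 + om * y2)%C.
Let num := (RtoC (2 * c) * zz * om * q - w)%C.
Let den := (RtoC (2 * c) - zz * w)%C.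

Lemma N2_1 x : Cmod x = 1 -> N2 x = 1.
Proof. intros H. rewrite <- Cmod_N2, H. ring. Qed.

Lemma point_den : den <> 0%C.
Proof.
  assert (E : (w - om * q * Cconj w)%C = (A + om * B)%C).
  { unfold w, A, B. rewrite Cplus_conj, Cmult_conj.
    replace (y1 + om * y2 - om * q * (Cconj y1 + Cconj om * Cconj y2))%C with
      (y1 - Cconj y2 * q * (Cconj om * om) + om * (y2 - Cconj y1 * q))%C by ring.
    rewrite unit_conj by auto. ring. }
  assert (H1 : Cmod (A + om * B) <= c * (1 - Cmod q ^ 2)).
  { eapply Rle_trans. apply Cmod_triangle. rewrite Cmod_mult, Hom. lra. }
  assert (H2 : Cmod w * (1 - Cmod q) <= Cmod (w - om * q * Cconj w)).
  { generalize (Cmod_rev_tri w (om * q * Cconj w)). rewrite !Cmod_mult, Hom, Cmod_conj. lra. }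
  rewrite E in H2.
  assert (Hw : Cmod w < 2 * c).
  { assert (0 < 1 - Cmod q) by lra. generalize (Cmod_ge_0 q). intro.
    assert (Cmod w * (1 - Cmod q) <= c * (1 + Cmod q) * (1 - Cmod q)) by nra.
    assert (Cmod w <= c * (1 + Cmod q)) by (apply Rmult_le_reg_r with (1 - Cmod q); lra). nra. }
  intro E0. unfold den in E0. assert (E1 : RtoC (2 * c) = (zz * w)%C).
  { replace (RtoC (2 * c)) with (RtoC (2 * c) - zz * w + zz * w)%C by ring. rewrite E0. ring. }
  apply (f_equal Cmod) in E1. rewrite Cmod_mult, Hzz, Cmod_R, Rabs_pos_eq in E1 by lra. lra.
Qed.

Lemma point_gap : N2 den - N2 num = 4 * c ^ 2 * (1 - Cmod q ^ 2) - 4 * c * fst (zz * (A + om * B))%C.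
Proof.
  unfold den, num, w, A, B. rewrite key_identity. rewrite (N2_1 zz Hzz), (N2_1 om Hom), <- Cmod_N2. ring.
Qed.

Lemma point_le1 : Cmod (num / den)%C <= 1.
Proof.
  rewrite Cmod_div by apply point_den.
  assert (Hd : 0 < Cmod den) by (apply (proj1 (Cmod_gt_0 _)); apply point_den).
  apply Rmult_le_reg_r with (Cmod den); auto. unfold Rdiv. rewrite Rmult_assoc, Rinv_l, Rmult_1_r, Rmult_1_l by lra.
  apply Cmod_le_N2. generalize point_gap. intro G.
  assert (fst (zz * (A + om * B))%C <= c * (1 - Cmod q ^ 2)).
  { eapply Rle_trans. apply fst_le_Cmod. rewrite Cmod_mult, Hzz, Rmult_1_l. eapply Rle_trans. apply Cmod_triangle.
    rewrite Cmod_mult, Hom. lra. }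
  nra.
Qed.

Lemma point_lt1 : Cmod A + Cmod B < c * (1 - Cmod q ^ 2) -> Cmod (num / den)%C < 1.
Proof.
  intros Hs. rewrite Cmod_div by apply point_den.
  assert (Hd : 0 < Cmod den) by (apply (proj1 (Cmod_gt_0 _)); apply point_den).
  apply Rmult_lt_reg_r with (Cmod den); auto. unfold Rdiv. rewrite Rmult_assoc, Rinv_l, Rmult_1_r, Rmult_1_l by lra.
  apply Cmod_lt_N2. generalize point_gap. intro G.
  assert (fst (zz * (A + om * B))%C < c * (1 - Cmod q ^ 2)).
  { eapply Rle_lt_trans. apply fst_le_Cmod. rewrite Cmod_mult, Hzz, Rmult_1_l. eapply Rle_lt_trans. apply Cmod_triangle.
    rewrite Cmod_mult, Hom. lra. }
  nra.
Qed.

Lemma point_back : Cmod (num / den)%C < 1 -> fst (zz * (A + om * B))%C < c * (1 - Cmod q ^ 2).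
Proof.
  intros H. rewrite Cmod_div in H by apply point_den.
  assert (Hd : 0 < Cmod den) by (apply (proj1 (Cmod_gt_0 _)); apply point_den).
  assert (H' : Cmod num < Cmod den).
  { apply Rmult_lt_compat_r with (r := Cmod den) in H; auto. unfold Rdiv in H.
    rewrite Rmult_assoc, Rinv_l, Rmult_1_r, Rmult_1_l in H by lra. auto. }
  apply Cmod_lt_N2 in H'. generalize point_gap. intro G. nra.
Qed.

End Point.


Lemma ex_Cdiff_plus f g z : (exists d, Cdiff f z d) -> (exists d, Cdiff g z d) ->
  exists d, Cdiff (fun w => f w + g w)%C z d.
Proof. intros [a Ha] [b Hb]. eexists. apply Cdiff_plus; eauto. Qed.

Lemma ex_Cdiff_mult f g z : (exists d, Cdiff f z d) -> (exists d, Cdiff g z d) ->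
  exists d, Cdiff (fun w => f w * g w)%C z d.
Proof. intros [a Ha] [b Hb]. eexists. apply Cdiff_mult; eauto. Qed.

Lemma ex_Cdiff_const c z : exists d, Cdiff (fun _ => c) z d.
Proof. eexists. apply Cdiff_const. Qed.

Lemma ex_Cdiff_minus f g z : (exists d, Cdiff f z d) -> (exists d, Cdiff g z d) ->
  exists d, Cdiff (fun w => f w - g w)%C z d.
Proof.
  intros Hf Hg. replace (fun w => f w - g w)%C with (fun w => f w + (RtoC (-1)) * g w)%C
    by (extensionality w; apply C_eq; simpl; ring).
  apply ex_Cdiff_plus; auto. apply ex_Cdiff_mult; auto. apply ex_Cdiff_const.
Qed.

Lemma ex_Cdiff_inv g z : (exists d, Cdiff g z d) -> g z <> 0%C -> exists d, Cdiff (fun w => Cinv (g w)) z d.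
Proof. intros [a Ha] Hz. eexists. apply (Cdiff_comp g Cinv z). eauto. apply Cdiff_inv; auto. Qed.

Lemma holo_Cdiff f : holo_on_disc f -> forall z, Cmod z < 1 -> exists d, Cdiff f z d.
Proof. intros H z Hz. destruct (H z Hz) as [l Hl]. exists l. apply is_derive_Cdiff. exact Hl. Qed.

Lemma binom_pos n j : (j <= n)%nat -> 0 < Binomial.C n j.
Proof.
  intros H. unfold Binomial.C. apply Rdiv_lt_0_compat. apply INR_fact_lt_0.
  apply Rmult_lt_0_compat; apply INR_fact_lt_0.
Qed.

Lemma pair_alg (bj bk q : C) :
  ((bj + Cconj bk * q) - Cconj (bk + Cconj bj * q) * q)%C = (bj * RtoC (1 - N2 q))%C.
Proof. destruct bj, bk, q. unfold N2. apply C_eq; simpl; ring. Qed.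

Lemma Cmod_q2 q : Cmod q < 1 -> 0 < 1 - Cmod q ^ 2.
Proof. intros H. generalize (Cmod_ge_0 q). nra. Qed.

Lemma gt_pair n y q j : in_Gt n y q -> (1 <= j <= n - 1)%nat ->
  Cmod q < 1 /\
  Cmod (y j - Cconj (y (n - j)%nat) * q)%C + Cmod (y (n - j)%nat - Cconj (y j) * q)%C
    < Binomial.C n j * (1 - Cmod q ^ 2).
Proof.
  intros [Hq [beta Hb]] Hj. split; [exact Hq|].
  destruct (Hb j Hj) as [E1 B1].
  destruct (Hb (n - j)%nat ltac:(lia)) as [E2 _].
  replace (n - (n - j))%nat with j in E2 by lia.
  rewrite E1, E2. rewrite pair_alg, pair_alg.
  rewrite !Cmod_mult, !Cmod_R, <- Cmod_N2. rewrite Rabs_pos_eq by (left; apply Cmod_q2; auto).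
  assert (H := Cmod_q2 q Hq). nra.
Qed.

Lemma le_of_small (x K : R) : 0 <= K -> (forall eps, 0 < eps <= 1 -> x < eps * K) -> x <= 0.
Proof.
  intros HK H. apply Rnot_lt_le. intro Hx.
  set (e := Rmin 1 (x / (K + 1))).
  assert (He : 0 < e) by (apply Rmin_pos; [lra| apply Rdiv_lt_0_compat; lra]).
  assert (He1 : e <= 1) by apply Rmin_l.
  assert (He2 : e <= x / (K + 1)) by apply Rmin_r.
  specialize (H e (conj He He1)).
  assert (e * K <= x / (K + 1) * K) by (apply Rmult_le_compat_r; auto).
  assert (x / (K + 1) * K < x).
  { apply Rmult_lt_reg_r with (K + 1). lra. replace (x / (K + 1) * K * (K + 1)) with (x * K) by (field; lra). nra. }
  lra.
Qed.

Lemma approx_bound (y1 y2 q y1' y2' q' : C) eps : 0 < eps <= 1 ->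
  Cmod (y1 - y1') < eps -> Cmod (y2 - y2') < eps -> Cmod (q - q') < eps ->
  Cmod (y1 - Cconj y2 * q)%C <= Cmod (y1' - Cconj y2' * q')%C + eps * (2 + Cmod y2 + Cmod q).
Proof.
  intros He H1 H2 H3.
  replace (y1 - Cconj y2 * q)%C with ((y1' - Cconj y2' * q') + ((y1 - y1') - Cconj y2 * (q - q') - Cconj (y2 - y2') * q'))%C
    by (rewrite Cminus_conj; ring).
  eapply Rle_trans. apply Cmod_triangle. apply Rplus_le_compat_l.
  eapply Rle_trans. apply Cmod_minus_le. eapply Rle_trans. apply Rplus_le_compat_r. apply Cmod_minus_le.
  rewrite !Cmod_mult, !Cmod_conj.
  assert (Hq' : Cmod q' <= Cmod q + 1).
  { generalize (Cmod_dist_tri q' q 0). replace (q' - 0)%C with q' by ring. replace (q - 0)%C with q by ring.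
    rewrite Cmod_sym. lra. }
  generalize (Cmod_ge_0 y2) (Cmod_ge_0 q') (Cmod_ge_0 (y2 - y2')) (Cmod_ge_0 (q - q')). nra.
Qed.

Lemma gamma_pair n y q j : in_Gammat n y q -> (1 <= j <= n - 1)%nat ->
  Cmod q <= 1 /\
  Cmod (y j - Cconj (y (n - j)%nat) * q)%C + Cmod (y (n - j)%nat - Cconj (y j) * q)%C
    <= Binomial.C n j * (1 - Cmod q ^ 2).
Proof.
  intros H Hj. set (c := Binomial.C n j). assert (Hc : 0 < c) by (apply binom_pos; lia).
  split.
  - apply Rnot_lt_le. intro Hlt. destruct (H (Cmod q - 1)) as [y' [q' [[Hq' _] [Hqq _]]]]. lra.
    unfold in_disc in Hq'. generalize (Cmod_dist_tri q q' 0). replace (q - 0)%C with q by ring.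
    replace (q' - 0)%C with q' by ring. lra.
  - set (K := (2 + Cmod (y (n - j)%nat) + Cmod q) + (2 + Cmod (y j) + Cmod q) + c * (2 * Cmod q + 1)).
    assert (HK : 0 <= K).
    { unfold K. generalize (Cmod_ge_0 (y (n - j)%nat)) (Cmod_ge_0 q) (Cmod_ge_0 (y j)). intros. nra. }
    cut (Cmod (y j - Cconj (y (n - j)%nat) * q)%C + Cmod (y (n - j)%nat - Cconj (y j) * q)%C
       - c * (1 - Cmod q ^ 2) <= 0). lra.
    apply (le_of_small _ K HK). intros eps Heps.
    destruct (H eps ltac:(lra)) as [y' [q' [Hg [Hqq Hyy]]]].
    destruct (gt_pair n y' q' j Hg Hj) as [Hq1 Hs]. fold c in Hs.
    assert (Y1 := Hyy j Hj). assert (Y2 := Hyy (n - j)%nat ltac:(lia)).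
    assert (B1 := approx_bound (y j) (y (n - j)%nat) q (y' j) (y' (n - j)%nat) q' eps Heps Y1 Y2 Hqq).
    assert (B2 := approx_bound (y (n - j)%nat) (y j) q (y' (n - j)%nat) (y' j) q' eps Heps Y2 Y1 Hqq).
    assert (Hqd : Cmod q ^ 2 - Cmod q' ^ 2 <= eps * (2 * Cmod q + 1)).
    { assert (Hd : Cmod q - Cmod q' <= eps) by (generalize (Cmod_rev_tri q q'); lra).
      assert (Hd2 : Cmod q' - Cmod q <= eps) by (generalize (Cmod_rev_tri q' q); rewrite Cmod_sym; lra).
      generalize (Cmod_ge_0 q) (Cmod_ge_0 q'). intros.
      replace (Cmod q ^ 2 - Cmod q' ^ 2) with ((Cmod q - Cmod q') * (Cmod q + Cmod q')) by ring.
      destruct (Rle_dec (Cmod q) (Cmod q')).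
      - assert ((Cmod q - Cmod q') * (Cmod q + Cmod q') <= 0) by nra. nra.
      - apply Rle_trans with (eps * (Cmod q + Cmod q')). apply Rmult_le_compat_r; lra. nra. }
    assert (Hcq : c * (Cmod q ^ 2 - Cmod q' ^ 2) <= c * (eps * (2 * Cmod q + 1))) by (apply Rmult_le_compat_l; lra).
    unfold K. nra.
Qed.


Lemma recon (a b q : C) : 1 - N2 q <> 0 ->
  a = ((a - Cconj b * q) * RtoC (/ (1 - N2 q)) + Cconj ((b - Cconj a * q) * RtoC (/ (1 - N2 q))) * q)%C.
Proof. intros H. destruct a, b, q. unfold N2 in *. simpl in *. apply C_eq; simpl; field; intro E; apply H; rewrite <- E; ring. Qed.

Theorem mainTheorem11 (n : nat) (psi_y : nat -> C -> C) (psi_q : C -> C) :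
  (2 <= n)%nat ->
  (forall j : nat, (1 <= j <= n - 1)%nat -> holo_on_disc (psi_y j)) ->
  holo_on_disc psi_q ->
  (forall z : C, in_disc z -> in_Gammat n (fun j => psi_y j z) (psi_q z)) ->
  (exists lambda0 : C, in_disc lambda0 /\
     in_Gt n (fun j => psi_y j lambda0) (psi_q lambda0)) ->
  forall z : C, in_disc z -> in_Gt n (fun j => psi_y j z) (psi_q z).
Proof.
  intros Hn Hy Hq Hcl [l0 [Hl0 Hint]] z Hz. unfold in_disc in *.
  assert (Qd := holo_Cdiff psi_q Hq).
  assert (Qb : forall w, Cmod w < 1 -> Cmod (psi_q w) <= 1).
  { intros w Hw. apply (gamma_pair n (fun j => psi_y j w) (psi_q w) 1%nat (Hcl w Hw)). lia. }
  assert (Ql0 : Cmod (psi_q l0) < 1) by (destruct Hint; auto).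
  assert (Qs : forall w, Cmod w < 1 -> Cmod (psi_q w) < 1) by (apply (maxmod psi_q Qd Qb l0 Hl0 Ql0)).
  assert (Pair : forall j, (1 <= j <= n - 1)%nat ->
    Cmod (psi_y j z - Cconj (psi_y (n - j)%nat z) * psi_q z)%C + Cmod (psi_y (n - j)%nat z - Cconj (psi_y j z) * psi_q z)%C
    < Binomial.C n j * (1 - Cmod (psi_q z) ^ 2)).
  { intros j Hj. set (c := Binomial.C n j). assert (Hc : 0 < c) by (apply binom_pos; lia).
    set (y1 := psi_y j). set (y2 := psi_y (n - j)%nat). set (q := psi_q).
    assert (Y1 : forall w, Cmod w < 1 -> exists d, Cdiff y1 w d) by (apply holo_Cdiff; apply Hy; auto).
    assert (Y2 : forall w, Cmod w < 1 -> exists d, Cdiff y2 w d) by (apply holo_Cdiff; apply Hy; lia).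
    assert (Cl : forall w, Cmod w < 1 -> Cmod (y1 w - Cconj (y2 w) * q w)%C + Cmod (y2 w - Cconj (y1 w) * q w)%C
        <= c * (1 - Cmod (q w) ^ 2)).
    { intros w Hw. apply (gamma_pair n (fun j => psi_y j w) (psi_q w) j (Hcl w Hw) Hj). }
    destruct (choose_rot (y1 z - Cconj (y2 z) * q z)%C (y2 z - Cconj (y1 z) * q z)%C) as [om [zz [Hom [Hzz Hrot]]]].
    set (g := fun w => ((RtoC (2 * c) * zz * om * q w - (y1 w + om * y2 w)) / (RtoC (2 * c) - zz * (y1 w + om * y2 w)))%C).
    assert (Gd : forall w, Cmod w < 1 -> exists d, Cdiff g w d).
    { intros w Hw. unfold g, Cdiv. apply ex_Cdiff_mult.
      - apply ex_Cdiff_minus. apply ex_Cdiff_mult. apply ex_Cdiff_const. apply Qd; auto.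
        apply ex_Cdiff_plus. apply Y1; auto. apply ex_Cdiff_mult. apply ex_Cdiff_const. apply Y2; auto.
      - apply (ex_Cdiff_inv (fun w => RtoC (2 * c) - zz * (y1 w + om * y2 w))%C).
        apply ex_Cdiff_minus. apply ex_Cdiff_const. apply ex_Cdiff_mult. apply ex_Cdiff_const.
        apply ex_Cdiff_plus. apply Y1; auto. apply ex_Cdiff_mult. apply ex_Cdiff_const. apply Y2; auto.
        apply (point_den c (y1 w) (y2 w) (q w) zz om Hc Hzz Hom (Qs w Hw) (Cl w Hw)). }
    assert (Gb : forall w, Cmod w < 1 -> Cmod (g w) <= 1).
    { intros w Hw. apply (point_le1 c (y1 w) (y2 w) (q w) zz om Hc Hzz Hom (Qs w Hw) (Cl w Hw)). }
    assert (Gl0 : Cmod (g l0) < 1).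
    { apply (point_lt1 c (y1 l0) (y2 l0) (q l0) zz om Hc Hzz Hom (Qs l0 Hl0) (Cl l0 Hl0)).
      apply (gt_pair n (fun j => psi_y j l0) (psi_q l0) j Hint Hj). }
    assert (Gz := maxmod g Gd Gb l0 Hl0 Gl0 z Hz).
    assert (Hb := point_back c (y1 z) (y2 z) (q z) zz om Hc Hzz Hom (Qs z Hz) (Cl z Hz) Gz).
    rewrite Hrot in Hb. exact Hb. }
  set (q := psi_q z). assert (Hqz : Cmod q < 1) by (apply Qs; auto).
  assert (HD : 0 < 1 - N2 q) by (rewrite <- Cmod_N2; apply Cmod_q2; auto).
  split. exact Hqz.
  exists (fun j => ((psi_y j z - Cconj (psi_y (n - j)%nat z) * q) * RtoC (/ (1 - N2 q)))%C).
  intros j Hj. split.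
  - replace (n - (n - j))%nat with j by lia. apply recon. lra.
  - replace (n - (n - j))%nat with j by lia.
    rewrite !Cmod_mult, !Cmod_R, Rabs_pos_eq by (left; apply Rinv_0_lt_compat; auto).
    specialize (Pair j Hj). fold q in Pair. rewrite Cmod_N2 in Pair.
    apply Rmult_lt_reg_r with (1 - N2 q); auto.
    replace ((Cmod (psi_y j z - Cconj (psi_y (n - j)%nat z) * q) * / (1 - N2 q) +
      Cmod (psi_y (n - j)%nat z - Cconj (psi_y j z) * q) * / (1 - N2 q)) * (1 - N2 q)) with
      (Cmod (psi_y j z - Cconj (psi_y (n - j)%nat z) * q) + Cmod (psi_y (n - j)%nat z - Cconj (psi_y j z) * q))
      by (field; lra).
    exact Pair.
Qed.
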